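(* Let $d\ge 1$ and let $p(x,y)$ be a nonzero real binary form of degree $d$ having exactly $\tau$ real linear factors, counted with multiplicity. Suppose $$p(x,y)=\sum_{k=1}^r \lambda_k(\cos\theta_k\, x-\sin\theta_k\, y)^d,$$ where $r\ge 2$, $-\tfrac{\pi}{2}<\theta_1<\theta_2<\dots<\theta_r\le\tfrac{\pi}{2}$, and all $\lambda_k$ are nonzero real numbers. Let $\sigma$ be the number of sign changes in the sequence $(\lambda_1,\lambda_2,\dots,\lambda_r,(-1)^d\lambda_1)$. Then $\tau\le\sigma$. *)

(* Defs.v *)
From Stdlib Require Import Reals Lra List.
Open Scope R_scope.

Definition binform (d : nat) (a : nat -> R) (x y : R) : R :=
  sum_f_R0 (fun i => a i * x ^ i * y ^ (d - i)) d.

Definition binform_nonzero (d : nat) (a : nat -> R) : Prop :=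
  exists i, (i <= d)%nat /\ a i <> 0.

Fixpoint prod_lin (m : nat) (u v : nat -> R) (x y : R) : R :=
  match m with
  | O => 1
  | S k => prod_lin k u v x y * (u k * x + v k * y)
  end.

Definition has_real_linear_factors (d : nat) (a : nat -> R) (m : nat) : Prop :=
  (m <= d)%nat /\
  exists (u v b : nat -> R),
    (forall i, (i < m)%nat -> u i <> 0 \/ v i <> 0) /\
    forall x y, binform d a x y = prod_lin m u v x y * binform (d - m) b x y.

Definition num_real_linear_factors (d : nat) (a : nat -> R) (tau : nat) : Prop :=
  has_real_linear_factors d a tau /\
  forall m, has_real_linear_factors d a m -> (m <= tau)%nat.

Fixpoint sign_changes_aux (l : list R) : nat :=
  match l with
  | a :: ((b :: _) as t) =>
      ((if Rlt_dec (a * b) 0 then 1 else 0) + sign_changes_aux t)%nat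
  | _ => O
  end.

Definition sign_changes (l : list R) : nat :=
  sign_changes_aux (filter (fun z => if Req_EM_T z 0 then false else true) l).

(* Main.v *)
Require Import Defs.
From Stdlib Require Import Reals Lra Lia List Classical.
Open Scope R_scope.

Lemma dpl_ext (f g : R -> R) x l :
  (forall s, f s = g s) -> derivable_pt_lim f x l -> derivable_pt_lim g x l.
Proof.
  intros H D eps He. destruct (D eps He) as [del Hd]. exists del.
  intros h H1 H2. rewrite <- !H. apply Hd; auto.
Qed.

Lemma dpl_plus (f g : R -> R) x l1 l2 :
  derivable_pt_lim f x l1 -> derivable_pt_lim g x l2 ->
  derivable_pt_lim (fun s => f s + g s) x (l1 + l2).
Proof. intros. apply (derivable_pt_lim_plus f g); auto. Qed.

Lemma dpl_mult (f g : R -> R) x l1 l2 :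
  derivable_pt_lim f x l1 -> derivable_pt_lim g x l2 ->
  derivable_pt_lim (fun s => f s * g s) x (l1 * g x + f x * l2).
Proof. intros. apply (derivable_pt_lim_mult f g); auto. Qed.

Lemma dpl_const c x : derivable_pt_lim (fun _ => c) x 0.
Proof. apply (derivable_pt_lim_const c). Qed.

Lemma dpl_scal (f : R -> R) x l c :
  derivable_pt_lim f x l -> derivable_pt_lim (fun s => c * f s) x (c * l).
Proof. intros. apply (derivable_pt_lim_scal f c x l); auto. Qed.

Lemma dpl_lin a b x : derivable_pt_lim (fun s => a + s * b) x b.
Proof.
  assert (H: derivable_pt_lim (fun s => (fun _ => a) s + (fun s => b * id s) s) x (0 + b * 1)).
  { apply dpl_plus. apply dpl_const. apply dpl_scal. apply derivable_pt_lim_id. }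
  replace (0 + b * 1) with b in H by ring.
  eapply dpl_ext; [|exact H]. intros; unfold id; simpl; ring.
Qed.

Lemma dpl_pow (f : R -> R) x l n :
  derivable_pt_lim f x l ->
  derivable_pt_lim (fun s => (f s) ^ n) x (INR n * (f x) ^ (pred n) * l).
Proof.
  intros H. replace (INR n * f x ^ pred n * l) with ((INR n * f x ^ pred n) * l) by ring.
  apply dpl_ext with (f := comp (fun y => y ^ n) f). reflexivity.
  apply derivable_pt_lim_comp; auto. apply derivable_pt_lim_pow.
Qed.

Definition IsForm (n : nat) (F : R -> R -> R) : Prop :=
  exists c, forall x y, F x y = binform n c x y.

Lemma form_ext n F G : (forall x y, F x y = G x y) -> IsForm n F -> IsForm n G.
Proof. intros H [c Hc]. exists c. intros; rewrite <- H; auto. Qed.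

Lemma binform_S n c x y :
  binform (S n) c x y = c (S n) * x ^ (S n) + y * binform n c x y.
Proof.
  unfold binform. rewrite tech5. rewrite Nat.sub_diag.
  rewrite scal_sum. rewrite Rplus_comm. f_equal. simpl; ring.
  apply sum_eq. intros i Hi. rewrite Nat.sub_succ_l by lia. simpl. ring.
Qed.

Lemma binform_0 c x y : binform 0 c x y = c 0%nat.
Proof. unfold binform. simpl. ring. Qed.

Lemma form0_iff F : IsForm 0 F <-> exists c, forall x y, F x y = c.
Proof.
  split.
  - intros [c Hc]. exists (c 0%nat). intros; rewrite Hc, binform_0; auto.
  - intros [c Hc]. exists (fun _ => c). intros; rewrite Hc, binform_0; auto.
Qed.

Lemma form_S_decomp n F : IsForm (S n) F ->
  exists c G, IsForm n G /\ forall x y, F x y = c * x ^ (S n) + y * G x y.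
Proof.
  intros [c Hc]. exists (c (S n)), (binform n c). split.
  exists c; auto. intros; rewrite Hc, binform_S; auto.
Qed.

Lemma form_S_build n c G : IsForm n G ->
  IsForm (S n) (fun x y => c * x ^ (S n) + y * G x y).
Proof.
  intros [cg Hg]. exists (fun i => if Nat.eqb i (S n) then c else cg i).
  intros x y. rewrite binform_S. rewrite Nat.eqb_refl. f_equal. f_equal.
  rewrite Hg. unfold binform. apply sum_eq. intros i Hi.
  destruct (Nat.eqb_spec i (S n)); [lia|auto].
Qed.

Lemma form_const c : IsForm 0 (fun _ _ => c).
Proof. apply form0_iff. exists c; auto. Qed.

Lemma form_zero n : IsForm n (fun _ _ => 0).
Proof.
  induction n. apply form_const.
  eapply form_ext; [|apply (form_S_build n 0 _ IHn)]. intros; simpl; ring.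
Qed.

Lemma form_add n F G : IsForm n F -> IsForm n G -> IsForm n (fun x y => F x y + G x y).
Proof.
  revert F G; induction n; intros F G HF HG.
  - apply form0_iff in HF; apply form0_iff in HG. destruct HF as [a Ha], HG as [b Hb].
    apply form0_iff. exists (a + b). intros; rewrite Ha, Hb; auto.
  - destruct (form_S_decomp _ _ HF) as [a [F1 [H1 E1]]].
    destruct (form_S_decomp _ _ HG) as [b [G1 [H2 E2]]].
    eapply form_ext; [|apply (form_S_build n (a+b) _ (IHn _ _ H1 H2))].
    intros; rewrite E1, E2; ring.
Qed.

Lemma form_scal n c F : IsForm n F -> IsForm n (fun x y => c * F x y).
Proof.
  revert F; induction n; intros F HF.
  - apply form0_iff in HF. destruct HF as [a Ha].
    apply form0_iff. exists (c * a). intros; rewrite Ha; auto.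
  - destruct (form_S_decomp _ _ HF) as [a [F1 [H1 E1]]].
    eapply form_ext; [|apply (form_S_build n (c*a) _ (IHn _ H1))].
    intros; rewrite E1; ring.
Qed.

Lemma form_mulx n F : IsForm n F -> IsForm (S n) (fun x y => x * F x y).
Proof.
  revert F; induction n; intros F HF.
  - apply form0_iff in HF. destruct HF as [a Ha].
    eapply form_ext; [|apply (form_S_build 0 a _ (form_zero 0))].
    intros; rewrite Ha; simpl; ring.
  - destruct (form_S_decomp _ _ HF) as [a [F1 [H1 E1]]].
    eapply form_ext; [|apply (form_S_build (S n) a _ (IHn _ H1))].
    intros; rewrite E1; simpl; ring.
Qed.

Lemma form_muly n F : IsForm n F -> IsForm (S n) (fun x y => y * F x y).
Proof.
  intros HF. eapply form_ext; [|apply (form_S_build n 0 _ HF)]. intros; simpl; ring.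
Qed.

Lemma form_mul_lin n u v F : IsForm n F ->
  IsForm (S n) (fun x y => (u * x + v * y) * F x y).
Proof.
  intros HF.
  eapply form_ext; [|apply form_add; [apply form_scal with (c:=u); apply form_mulx, HF
                                     |apply form_scal with (c:=v); apply form_muly, HF]].
  intros; simpl; ring.
Qed.

Lemma form_pow_lin n u v : IsForm n (fun x y => (u * x + v * y) ^ n).
Proof.
  induction n. eapply form_ext; [|apply (form_const 1)]. intros; simpl; ring.
  eapply form_ext; [|apply (form_mul_lin _ u v _ IHn)]. intros; simpl; ring.
Qed.

Lemma form_xpow n : IsForm n (fun x y => x ^ n).
Proof.
  eapply form_ext; [|apply (form_pow_lin n 1 0)]. intros; cbv beta; replace (1*x+0*y) with x by ring; reflexivity.
Qed.

Lemma form_ypow n : IsForm n (fun x y => y ^ n).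
Proof.
  eapply form_ext; [|apply (form_pow_lin n 0 1)]. intros; cbv beta; replace (0*x+1*y) with y by ring; reflexivity.
Qed.

Lemma form_homog n F : IsForm n F -> forall t x y, F (t * x) (t * y) = t ^ n * F x y.
Proof.
  revert F; induction n; intros F HF t x y.
  - apply form0_iff in HF. destruct HF as [a Ha]. rewrite !Ha. simpl; ring.
  - destruct (form_S_decomp _ _ HF) as [a [F1 [H1 E1]]].
    rewrite !E1, (IHn _ H1). rewrite Rpow_mult_distr. simpl; ring.
Qed.

Lemma geom_form n b : exists T, IsForm n T /\
  forall x y, x ^ (S n) - (b * y) ^ (S n) = (x - b * y) * T x y.
Proof.
  induction n.
  - exists (fun _ _ => 1). split. apply form_const. intros; simpl; ring.
  - destruct IHn as [T [HT ET]].
    exists (fun x y => x * T x y + b ^ (S n) * y ^ (S n)). split.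
    + apply form_add. apply form_mulx; auto. apply form_scal, form_ypow.
    + intros x y. transitivity (x * (x ^ S n - (b * y) ^ S n) + (x - b*y) * (b * y) ^ S n).
      * simpl; ring.
      * rewrite ET, Rpow_mult_distr. ring.
Qed.

Lemma factor_b1 n F b : IsForm (S n) F -> F b 1 = 0 ->
  exists R, IsForm n R /\ forall x y, F x y = (x - b * y) * R x y.
Proof.
  revert F; induction n; intros F HF Hz.
  - destruct (form_S_decomp _ _ HF) as [c [G [HG EG]]].
    apply form0_iff in HG. destruct HG as [g Hg].
    rewrite EG, Hg in Hz. exists (fun _ _ => c). split. apply form_const.
    intros x y. rewrite EG, Hg. assert (g = - c * b) by (simpl in Hz; lra). subst g.
    simpl; ring.
  - destruct (form_S_decomp _ _ HF) as [c [G [HG EG]]].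
    destruct (geom_form (S n) b) as [T [HT ET]].
    set (G2 := fun x y => c * b ^ (S (S n)) * y ^ (S n) + G x y).
    assert (HG2 : IsForm (S n) G2).
    { apply form_add; auto. apply form_scal, form_ypow. }
    assert (EF : forall x y, F x y = c * ((x - b * y) * T x y) + y * G2 x y).
    { intros. rewrite EG, <- ET. unfold G2. rewrite Rpow_mult_distr. simpl; ring. }
    assert (Hz2 : G2 b 1 = 0).
    { rewrite EF in Hz. replace (b - b * 1) with 0 in Hz by ring. lra. }
    destruct (IHn _ HG2 Hz2) as [R2 [HR2 ER2]].
    exists (fun x y => c * T x y + y * R2 x y). split.
    + apply form_add. apply form_scal; auto. apply form_muly; auto.
    + intros x y. rewrite EF, ER2. ring.
Qed.

Definition nz (P : R * R) : Prop := fst P <> 0 \/ snd P <> 0.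

Lemma factor_point n F P : IsForm n F -> nz P -> F (fst P) (snd P) = 0 ->
  exists u v, (u <> 0 \/ v <> 0) /\ u * fst P + v * snd P = 0 /\
  exists k R, IsForm k R /\ forall x y, F x y = (u * x + v * y) * R x y.
Proof.
  destruct P as [p q]; simpl. intros HF Hnz Hz. destruct n.
  - apply form0_iff in HF. destruct HF as [c Hc].
    exists (-q), p. split. unfold nz in Hnz; simpl in Hnz.
    destruct Hnz; [right|left]; auto. lra. split. ring.
    exists 0%nat, (fun _ _ => 0). split. apply form_const.
    intros. rewrite Hc. rewrite Hc in Hz. rewrite Hz. ring.
  - destruct (Req_EM_T q 0) as [Hq|Hq].
    + subst q. unfold nz in Hnz; simpl in Hnz. destruct Hnz as [Hp|Hp]; [|lra].
      destruct (form_S_decomp _ _ HF) as [c [G [HG EG]]].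
      assert (c = 0).
      { rewrite EG in Hz. replace (0 * G p 0) with 0 in Hz by ring.
        rewrite Rplus_0_r in Hz. apply Rmult_integral in Hz. destruct Hz; auto.
        exfalso. apply (pow_nonzero p (S n)); auto. }
      subst c. exists 0, 1. split. right; lra. split. ring.
      exists n, G. split; auto. intros; rewrite EG; ring.
    + assert (Hb : F (p / q) 1 = 0).
      { assert (E := form_homog _ _ HF q (p/q) 1).
        replace (q * (p / q)) with p in E by (field; auto).
        replace (q * 1) with q in E by ring. rewrite Hz in E.
        symmetry in E. apply Rmult_integral in E. destruct E as [E|E]; auto.
        exfalso. apply (pow_nonzero q (S n)); auto. }
      destruct (factor_b1 _ _ _ HF Hb) as [R0 [HR ER]].
      exists 1, (- (p / q)). split. left; lra. split. field; auto.
      exists n, R0. split; auto. intros; rewrite ER; ring.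
Qed.

Lemma form_deriv n F al be : IsForm n F ->
  exists G, IsForm (pred n) G /\ (n = 0%nat -> forall x y, G x y = 0) /\
  forall x y s, derivable_pt_lim (fun s => F (x + s * al) (y + s * be)) s
                                   (G (x + s * al) (y + s * be)).
Proof.
  revert F; induction n; intros F HF.
  - apply form0_iff in HF. destruct HF as [c Hc].
    exists (fun _ _ => 0). split. apply form_const. split. auto.
    intros. eapply dpl_ext; [|apply (dpl_const c)]. intros; simpl; rewrite Hc; auto.
  - destruct (form_S_decomp _ _ HF) as [c [F1 [H1 E1]]].
    destruct (IHn _ H1) as [G1 [HG1 [Z1 D1]]].
    exists (fun x y => c * INR (S n) * al * x ^ n + be * F1 x y + y * G1 x y).
    split; [|split].
    + simpl. apply form_add. apply form_add.
      eapply form_ext; [|apply (form_scal n (c * INR (S n) * al) _ (form_xpow n))].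
      intros; simpl; ring. apply form_scal; auto.
      destruct n. eapply form_ext; [|apply (form_zero 0)]. intros; rewrite Z1; auto; ring.
      apply form_muly; auto.
    + intros H; discriminate.
    + intros x y s.
      apply dpl_ext with (f := fun s => c * (x + s * al) ^ S n +
                           (y + s * be) * F1 (x + s * al) (y + s * be)).
      { intros s'. rewrite E1. reflexivity. }
      match goal with |- derivable_pt_lim _ _ ?l =>
        replace l with (c * (INR (S n) * (x + s * al) ^ pred (S n) * al) +
            (be * F1 (x + s * al) (y + s * be) + (y + s * be) * G1 (x + s * al) (y + s * be)))
          by (simpl; ring) end.
      apply dpl_plus. apply dpl_scal. apply (dpl_pow (fun s => x + s * al)). apply dpl_lin.
      apply (dpl_mult (fun s => y + s * be) (fun s => F1 (x + s * al) (y + s * be))). apply dpl_lin. apply D1.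
Qed.
Definition Spow (d : nat) (th la : nat -> R) (r : nat) (x y : R) : R :=
  sum_f_R0 (fun k => la k * (cos (th k) * x - sin (th k) * y) ^ d) (r - 1).

Lemma sum_form d N (th la : nat -> R) :
  IsForm d (fun x y => sum_f_R0 (fun k => la k * (cos (th k) * x - sin (th k) * y) ^ d) N).
Proof.
  induction N.
  - simpl. eapply form_ext; [|apply (form_scal d (la 0%nat) _ (form_pow_lin d (cos (th 0%nat)) (- sin (th 0%nat))))].
    intros; simpl. f_equal. f_equal. ring.
  - eapply form_ext; [|apply form_add; [apply IHN|apply (form_scal d (la (S N)) _ (form_pow_lin d (cos (th (S N))) (- sin (th (S N)))))]].
    intros; simpl. f_equal. f_equal. f_equal. ring.
Qed.

Lemma Spow_form d th la r : IsForm d (Spow d th la r).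
Proof. unfold Spow. apply sum_form. Qed.

Lemma sum_deriv d N (th la : nat -> R) x y al be s :
  derivable_pt_lim
    (fun s => sum_f_R0 (fun k => la k * (cos (th k) * (x + s * al) - sin (th k) * (y + s * be)) ^ d) N) s
    (sum_f_R0 (fun k => la k * (INR d * (cos (th k) * (x + s * al) - sin (th k) * (y + s * be)) ^ pred d
                                 * (cos (th k) * al - sin (th k) * be))) N).
Proof.
  induction N.
  - simpl. apply dpl_scal.
    apply (dpl_pow (fun s => cos (th 0%nat) * (x + s * al) - sin (th 0%nat) * (y + s * be))).
    eapply dpl_ext; [|apply (dpl_lin (cos (th 0%nat) * x - sin (th 0%nat) * y))].
    intros; simpl; ring.
  - simpl. apply dpl_plus. apply IHN. apply dpl_scal.
    apply (dpl_pow (fun s => cos (th (S N)) * (x + s * al) - sin (th (S N)) * (y + s * be))).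
    eapply dpl_ext; [|apply (dpl_lin (cos (th (S N)) * x - sin (th (S N)) * y))].
    intros; simpl; ring.
Qed.

Definition skip (k j : nat) : nat := if Nat.ltb j k then j else S j.

Lemma skip_ne k j : skip k j <> k.
Proof. unfold skip. destruct (Nat.ltb_spec j k); lia. Qed.

Lemma skip_lt k j : (j < k)%nat -> skip k j = j.
Proof. unfold skip. destruct (Nat.ltb_spec j k); lia. Qed.
Lemma skip_ge k j : (k <= j)%nat -> skip k j = S j.
Proof. unfold skip. destruct (Nat.ltb_spec j k); lia. Qed.

Lemma sum_skip (f : nat -> R) N k : (k <= S N)%nat ->
  sum_f_R0 f (S N) = f k + sum_f_R0 (fun j => f (skip k j)) N.
Proof.
  revert k; induction N; intros k Hk.
  - simpl. unfold skip. destruct k as [|[|k]]; simpl; try lia; ring.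
  - destruct (Nat.eq_dec k (S (S N))) as [E|E].
    + subst k. rewrite tech5. rewrite Rplus_comm. f_equal.
      apply sum_eq. intros i Hi. unfold skip.
      destruct (Nat.ltb_spec i (S (S N))); [auto|lia].
    + rewrite tech5. rewrite (IHN k) by lia. rewrite tech5.
      rewrite (skip_ge k (S N)) by lia. ring.
Qed.

(* the derivative of Spow in the direction killing the k-th form *)
Definition th' (th : nat -> R) k j := th (skip k j).
Definition la' d (th la : nat -> R) k j :=
  la (skip k j) * INR d * sin (th k - th (skip k j)).

Lemma Spow_deriv_k d th la r k : (2 <= r)%nat -> (k < r)%nat ->
  forall x y s,
  derivable_pt_lim (fun s => Spow d th la r (x + s * sin (th k)) (y + s * cos (th k))) s
    (Spow (pred d) (th' th k) (la' d th la k) (pred r)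
       (x + s * sin (th k)) (y + s * cos (th k))).
Proof.
  intros Hr Hk x y s. unfold Spow.
  pose proof (sum_deriv d (r-1) th la x y (sin (th k)) (cos (th k)) s) as D.
  match type of D with derivable_pt_lim _ _ ?l => replace l with
    (sum_f_R0 (fun k0 => la' d th la k k0 * (cos (th' th k k0) * (x + s * sin (th k))
       - sin (th' th k k0) * (y + s * cos (th k))) ^ pred d) (pred r - 1)) in D end.
  exact D.
  replace (r - 1)%nat with (S (pred r - 1)) by lia.
  rewrite (sum_skip _ _ k) by lia.
  replace (cos (th k) * sin (th k) - sin (th k) * cos (th k)) with 0 by ring.
  rewrite Rmult_0_r, Rmult_0_r, Rplus_0_l.
  apply sum_eq. intros i Hi. unfold la', th'. rewrite sin_minus. ring.
Qed.
Definition order (F : R -> R -> R) (P : R * R) (e : nat) : Prop :=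
  exists u v, (u <> 0 \/ v <> 0) /\ u * fst P + v * snd P = 0 /\
  exists k Rf, IsForm k Rf /\ forall x y, F x y = (u * x + v * y) ^ e * Rf x y.

Definition prop (P Q : R * R) : Prop := fst P * snd Q - snd P * fst Q = 0.

Fixpoint pw (l : list (R * R * nat)) : Prop :=
  match l with
  | nil => True
  | q :: l' => (forall q', In q' l' -> ~ prop (fst q) (fst q')) /\ pw l'
  end.

Definition valid F (pts : list (R * R * nat)) : Prop :=
  pw pts /\ forall q, In q pts -> nz (fst q) /\ order F (fst q) (snd q).

Fixpoint total (l : list (R * R * nat)) : nat :=
  match l with nil => 0%nat | q :: l' => (snd q + total l')%nat end.

Lemma lin_prop u v P Q : u * fst P + v * snd P = 0 -> prop P Q -> nz P ->
  u * fst Q + v * snd Q = 0.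
Proof.
  unfold prop, nz. destruct P as [p1 p2], Q as [q1 q2]; simpl. intros H1 H2 H3.
  destruct H3 as [H3|H3].
  - apply (Rmult_eq_reg_l p1); auto.
    replace (p1 * (u * q1 + v * q2)) with (q1 * (u * p1 + v * p2) + v * (p1 * q2 - p2 * q1)) by ring.
    rewrite H1, H2; ring.
  - apply (Rmult_eq_reg_l p2); auto.
    replace (p2 * (u * q1 + v * q2)) with (q2 * (u * p1 + v * p2) - u * (p1 * q2 - p2 * q1)) by ring.
    rewrite H1, H2; ring.
Qed.

Lemma prop_sym P Q : prop P Q -> prop Q P.
Proof. unfold prop; intros; lra. Qed.

Lemma order_zero F P e : order F P e -> (1 <= e)%nat -> F (fst P) (snd P) = 0.
Proof.
  intros [u [v [_ [Hl [k [Rf [_ E]]]]]]] He. rewrite E, Hl.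
  destruct e; [lia|]. simpl; ring.
Qed.

Lemma order_prop F P Q e : order F P e -> prop P Q -> nz P -> order F Q e.
Proof.
  intros [u [v [Huv [Hl Hr]]]] Hp Hnz. exists u, v. split; auto. split; auto.
  eapply lin_prop; eauto.
Qed.

Lemma order_dec F P e : order F P (S e) -> order F P e.
Proof.
  intros [u [v [Huv [Hl [k [Rf [HR E]]]]]]]. exists u, v. split; auto. split; auto.
  exists (S k), (fun x y => (u * x + v * y) * Rf x y). split.
  apply form_mul_lin; auto. intros; rewrite E; simpl; ring.
Qed.

Lemma dpl_eq_l (f : R -> R) x l l' : derivable_pt_lim f x l -> l = l' -> derivable_pt_lim f x l'.
Proof. intros H E; subst; auto. Qed.

Definition DD (F G : R -> R -> R) (al be : R) : Prop :=
  forall x y s, derivable_pt_lim (fun s => F (x + s * al) (y + s * be)) s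
                                  (G (x + s * al) (y + s * be)).

Lemma DD0 F G al be : DD F G al be -> forall x y,
  derivable_pt_lim (fun s => F (x + s * al) (y + s * be)) 0 (G x y).
Proof.
  intros H x y. pose proof (H x y 0) as D.
  replace (x + 0 * al) with x in D by ring. replace (y + 0 * be) with y in D by ring. exact D.
Qed.

Lemma deriv_lpow u v e k Rf al be : IsForm k Rf ->
  exists GR, IsForm (pred k) GR /\ (k = 0%nat -> forall x y, GR x y = 0) /\
  forall x y, derivable_pt_lim
    (fun s => (u * (x + s * al) + v * (y + s * be)) ^ e * Rf (x + s * al) (y + s * be)) 0
    (INR e * (u * x + v * y) ^ pred e * (u * al + v * be) * Rf x y + (u * x + v * y) ^ e * GR x y).
Proof.
  intros HR. destruct (form_deriv k Rf al be HR) as [GR [HG [Z D]]].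
  exists GR. split; auto. split; auto. intros x y.
  pose proof (D x y 0) as D0.
  replace (x + 0 * al) with x in D0 by ring. replace (y + 0 * be) with y in D0 by ring.
  assert (L : derivable_pt_lim (fun s => u * (x + s * al) + v * (y + s * be)) 0 (u * al + v * be)).
  { eapply dpl_ext; [|apply (dpl_lin (u * x + v * y))]. intros; simpl; ring. }
  pose proof (dpl_mult _ _ _ _ _ (dpl_pow _ _ _ e L) D0) as M. cbv beta in M.
  replace (u * (x + 0 * al) + v * (y + 0 * be)) with (u * x + v * y) in M by ring.
  replace (x + 0 * al) with x in M by ring. replace (y + 0 * be) with y in M by ring.
  exact M.
Qed.

Lemma order_deriv_aff F G al be P e : DD F G al be -> order F P (S e) -> order G P e.
Proof.
  intros HD [u [v [Huv [Hl [k [Rf [HR E]]]]]]].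
  destruct (deriv_lpow u v (S e) k Rf al be HR) as [GR [HG [Z D]]].
  exists u, v. split; auto. split; auto.
  exists k, (fun x y => INR (S e) * (u * al + v * be) * Rf x y + (u * x + v * y) * GR x y).
  split.
  - destruct k.
    + eapply form_ext; [|apply (form_scal 0 (INR (S e) * (u * al + v * be)) _ HR)].
      intros; rewrite Z; auto; ring.
    + apply form_add. apply form_scal; auto. apply form_mul_lin; auto.
  - intros x y. apply (uniqueness_limite (fun s => F (x + s * al) (y + s * be)) 0).
    apply DD0; auto.
    eapply dpl_eq_l. eapply dpl_ext; [|apply D]. intros s; simpl. rewrite E. reflexivity.
    replace (pred (S e)) with e by reflexivity. simpl; ring.
Qed.

Lemma order_deriv_inf F G al be P e : DD F G al be -> order F P e ->
  prop P (al, be) -> nz P -> order G P e.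
Proof.
  intros HD [u [v [Huv [Hl [k [Rf [HR E]]]]]]] Hp Hnz.
  assert (Hv : u * al + v * be = 0).
  { pose proof (lin_prop u v P (al, be) Hl Hp Hnz) as X. simpl in X. exact X. }
  destruct (deriv_lpow u v e k Rf al be HR) as [GR [HG [Z D]]].
  exists u, v. split; auto. split; auto.
  exists (pred k), GR. split; auto.
  intros x y. apply (uniqueness_limite (fun s => F (x + s * al) (y + s * be)) 0).
  apply DD0; auto.
  eapply dpl_eq_l. eapply dpl_ext; [|apply D]. intros s; simpl. rewrite E. reflexivity.
  rewrite Hv. ring.
Qed.
Lemma list_max (T : list R) : T <> nil -> exists m, In m T /\ forall t, In t T -> t <= m.
Proof.
  induction T as [|a T IH]; intros H; [congruence|].
  destruct T as [|b T'].
  - exists a. split; [left; auto|]. intros t [->|[]]; lra.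
  - destruct IH as [m [Hm Hmax]]; [discriminate|].
    destruct (Rle_dec a m).
    + exists m. split; [right; auto|]. intros t [<-|Ht]; auto.
    + exists a. split; [left; auto|]. intros t [<-|Ht]; [lra|]. specialize (Hmax t Ht); lra.
Qed.

Lemma rolle_list (f f' : R -> R) : (forall t, derivable_pt_lim f t (f' t)) ->
  forall n T, length T = n -> NoDup T -> (forall t, In t T -> f t = 0) ->
  exists X, NoDup X /\ length X = pred (length T) /\
    (forall z, In z X -> f' z = 0 /\ ~ In z T /\ exists t, In t T /\ z < t).
Proof.
  intros Hd n. induction n as [n IH] using (well_founded_induction Wf_nat.lt_wf).
  intros T HT Hnd Hz.
  destruct T as [|a T0].
  - exists nil. simpl. split; [constructor|]. split; auto. intros z [].
  - assert (Hne : a :: T0 <> nil) by discriminate.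
    destruct (list_max _ Hne) as [m [Hm Hmax]].
    destruct (in_split _ _ Hm) as [T1 [T2 ET]].
    set (T' := T1 ++ T2).
    assert (Hnd' : NoDup T') by (rewrite ET in Hnd; eapply NoDup_remove_1; eauto).
    assert (Hnm : ~ In m T') by (rewrite ET in Hnd; eapply NoDup_remove_2; eauto).
    assert (Hlen : length (a :: T0) = S (length T')).
    { rewrite ET. unfold T'. rewrite !length_app. simpl. lia. }
    assert (Hsub : forall t, In t T' -> In t (a :: T0)).
    { intros t Ht. rewrite ET. unfold T' in Ht. apply in_app_or in Ht.
      apply in_or_app. destruct Ht; [left|right; right]; auto. }
    destruct T' as [|b T''] eqn:ET'.
    + exists nil. split; [constructor|]. split. rewrite Hlen; reflexivity. intros z [].
    + destruct (IH (length (b :: T''))) with (T := b :: T'') as [X [HX1 [HX2 HX3]]].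
      rewrite <- HT, Hlen. lia. reflexivity. auto. intros t Ht; apply Hz, Hsub; auto.
      assert (Hne2 : b :: T'' <> nil) by discriminate.
      destruct (list_max _ Hne2) as [M [HM HMmax]].
      assert (HMm : M < m).
      { assert (M <= m) by (apply Hmax, Hsub; auto).
        destruct (Req_dec M m); [subst; contradiction|lra]. }
      destruct (MVT_cor2 f f' M m HMm) as [c [Hc1 Hc2]]. intros; apply Hd.
      rewrite (Hz m Hm), (Hz M (Hsub _ HM)) in Hc1.
      assert (Hfc : f' c = 0).
      { assert (f' c * (m - M) = 0) by lra. apply Rmult_integral in H. destruct H; auto. lra. }
      exists (c :: X). split; [|split].
      * constructor; auto. intros Hin. destruct (HX3 c Hin) as [_ [_ [t [Ht Hct]]]].
        specialize (HMmax t Ht). lra.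
      * rewrite Hlen. simpl. rewrite HX2. simpl. reflexivity.
      * intros z [<-|Hin].
        -- split; auto. split.
           ++ intros Hin. rewrite ET in Hin. apply in_app_or in Hin.
              destruct Hin as [Hin|[Hin|Hin]].
              ** assert (In c (b :: T'')) by (rewrite <- ET'; apply in_or_app; left; auto).
                 specialize (HMmax c H); lra.
              ** lra.
              ** assert (In c (b :: T'')) by (rewrite <- ET'; apply in_or_app; right; auto).
                 specialize (HMmax c H); lra.
           ++ exists m. split; auto. lra.
        -- destruct (HX3 z Hin) as [H1 [H2 [t [Ht Hzt]]]]. split; auto. split.
           ++ intros Hin2. rewrite ET in Hin2. apply in_app_or in Hin2.
              destruct Hin2 as [Hin2|[Hin2|Hin2]].
              ** apply H2. rewrite <- ET'. apply in_or_app; left; auto.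
              ** subst z. specialize (HMmax t Ht). lra.
              ** apply H2. rewrite <- ET'. apply in_or_app; right; auto.
           ++ exists t. split; auto.
Qed.
Lemma pw_filter (f : R * R * nat -> bool) l : pw l -> pw (filter f l).
Proof.
  induction l as [|a l IH]; simpl; auto. intros [H1 H2].
  destruct (f a); simpl; auto. split; auto.
  intros q' Hq'. apply filter_In in Hq'. apply H1; tauto.
Qed.

Lemma pw_map (g : R * R * nat -> nat) l : pw l -> pw (map (fun q => (fst q, g q)) l).
Proof.
  induction l as [|a l IH]; simpl; auto. intros [H1 H2]. split; auto.
  intros q' Hq'. apply in_map_iff in Hq'. destruct Hq' as [b [<- Hb]]. simpl. apply H1; auto.
Qed.

Lemma pw_app l1 l2 : pw l1 -> pw l2 ->
  (forall a b, In a l1 -> In b l2 -> ~ prop (fst a) (fst b)) -> pw (l1 ++ l2).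
Proof.
  induction l1 as [|a l1 IH]; simpl; auto. intros [H1 H2] H3 H4. split.
  - intros q' Hq'. apply in_app_or in Hq'. destruct Hq'; auto.
  - apply IH; auto.
Qed.

Lemma pw_new (Qp : R -> R * R) X : NoDup X ->
  (forall z z', z <> z' -> ~ prop (Qp z) (Qp z')) -> pw (map (fun z => (Qp z, 1%nat)) X).
Proof.
  induction X as [|a X IH]; simpl; auto. intros Hnd H. inversion Hnd; subst. split; auto.
  intros q' Hq'. apply in_map_iff in Hq'. destruct Hq' as [b [<- Hb]]. simpl.
  apply H. intros ->. contradiction.
Qed.

Lemma total_app l1 l2 : total (l1 ++ l2) = (total l1 + total l2)%nat.
Proof. induction l1; simpl; auto. rewrite IHl1; lia. Qed.

Lemma total_split (f : R * R * nat -> bool) l :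
  total l = (total (filter f l) + total (filter (fun q => negb (f q)) l))%nat.
Proof. induction l as [|a l IH]; simpl; auto. destruct (f a); simpl; lia. Qed.

Lemma total_zero l : (forall q, In q l -> snd q = 0%nat) -> total l = 0%nat.
Proof.
  induction l as [|a l IH]; simpl; auto. intros H. rewrite H by auto. rewrite IH; auto.
Qed.

Lemma total_pred l : (forall q, In q l -> (1 <= snd q)%nat) ->
  (total (map (fun q => (fst q, pred (snd q))) l) + length l)%nat = total l.
Proof.
  induction l as [|a l IH]; simpl; auto. intros H.
  assert (1 <= snd a)%nat by auto. rewrite <- IH by auto. lia.
Qed.

Lemma total_one (Qp : R -> R * R) X : total (map (fun z => (Qp z, 1%nat)) X) = length X.
Proof. induction X; simpl; auto. Qed.

Lemma nodup_map_pw (f : R * R * nat -> R) l : pw l ->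
  (forall a b, In a l -> In b l -> f a = f b -> prop (fst a) (fst b)) -> NoDup (map f l).
Proof.
  induction l as [|a l IH]; simpl; intros Hp H. constructor.
  destruct Hp as [H1 H2]. constructor.
  - intros Hin. apply in_map_iff in Hin. destruct Hin as [b [Eb Hb]].
    apply (H1 b Hb). apply H; auto.
  - apply IH; auto.
Qed.

Definition dot0 (al be : R) (P : R * R) := fst P * be - snd P * al.
Definition dotv (al be : R) (P : R * R) := fst P * al + snd P * be.
Definition Qpt (al be t : R) : R * R := (be + t * al, - al + t * be).

Lemma step F G al be n : al * al + be * be = 1 -> DD F G al be -> IsForm n G ->
  forall pts, valid F pts -> exists pts', valid G pts' /\ (total pts <= S (total pts'))%nat.
Proof.
  intros Hab HD HG pts [Hpw Hv].
  set (aff := fun q : R * R * nat => if Req_EM_T (dot0 al be (fst q)) 0 then false else true).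
  set (pos := fun q : R * R * nat => Nat.ltb 0 (snd q)).
  set (A := filter pos (filter aff pts)).
  set (B := filter (fun q => negb (aff q)) pts).
  assert (HA : forall q, In q A -> In q pts /\ dot0 al be (fst q) <> 0 /\ (1 <= snd q)%nat).
  { intros q Hq. unfold A in Hq. apply filter_In in Hq. destruct Hq as [Hq Hp].
    apply filter_In in Hq. destruct Hq as [Hq Ha]. unfold aff in Ha. unfold pos in Hp.
    destruct (Req_EM_T (dot0 al be (fst q)) 0); try discriminate.
    apply Nat.ltb_lt in Hp. split; auto. }
  assert (HB : forall q, In q B -> In q pts /\ dot0 al be (fst q) = 0).
  { intros q Hq. unfold B in Hq. apply filter_In in Hq. destruct Hq as [Hq Ha]. unfold aff in Ha.
    destruct (Req_EM_T (dot0 al be (fst q)) 0); try discriminate. auto. }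
  set (param := fun q : R * R * nat => dotv al be (fst q) / dot0 al be (fst q)).
  set (T := map param A).
  set (f := fun t => F (be + t * al) (- al + t * be)).
  set (f' := fun t => G (be + t * al) (- al + t * be)).
  assert (Hd : forall t, derivable_pt_lim f t (f' t)).
  { intros t. apply (HD be (- al) t). }
  assert (Hprop_param : forall q, dot0 al be (fst q) <> 0 -> prop (fst q) (Qpt al be (param q))).
  { intros q Hq. unfold prop, Qpt, param, dotv, dot0 in *. simpl. field. auto. }
  assert (Hz : forall t, In t T -> f t = 0).
  { intros t Ht. unfold T in Ht. apply in_map_iff in Ht. destruct Ht as [q [<- Hq]].
    destruct (HA q Hq) as [Hq1 [Hq2 Hq3]]. destruct (Hv q Hq1) as [Hnz Ho].
    pose proof (order_prop _ _ _ _ Ho (Hprop_param q Hq2) Hnz) as Ho2.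
    apply (order_zero _ _ _ Ho2 Hq3). }
  assert (Hdet : forall P P', fst P * snd P' - snd P * fst P' =
             dot0 al be P * dotv al be P' - dotv al be P * dot0 al be P').
  { intros [p1 p2] [q1 q2]. unfold dot0, dotv. simpl.
    transitivity ((p1 * q2 - p2 * q1) * (al * al + be * be)). rewrite Hab; ring. ring. }
  assert (HndT : NoDup T).
  { apply nodup_map_pw. apply pw_filter, pw_filter; auto.
    intros a b Ha Hb Eab. destruct (HA a Ha) as [_ [Ha2 _]]. destruct (HA b Hb) as [_ [Hb2 _]].
    unfold prop. rewrite Hdet. unfold param in Eab.
    set (a0 := dot0 al be (fst a)) in *. set (b0 := dot0 al be (fst b)) in *.
    set (a1 := dotv al be (fst a)) in *. set (b1 := dotv al be (fst b)) in *.
    replace (a0 * b1 - a1 * b0) with (a0 * b0 * (b1 / b0 - a1 / a0)) by (field; auto).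
    rewrite Eab. ring. }
  destruct (rolle_list f f' Hd _ T eq_refl HndT Hz) as [X [HX1 [HX2 HX3]]].
  set (pA := map (fun q => (fst q, pred (snd q))) A).
  set (pX := map (fun z => (Qpt al be z, 1%nat)) X).
  exists (pA ++ B ++ pX). split; [split|].
  -
    apply pw_app; [apply pw_map, pw_filter, pw_filter; auto|apply pw_app|].
    + apply pw_filter; auto.
    + apply pw_new; auto. intros z z' Hzz. unfold prop, Qpt. simpl.
      intros E. apply Hzz. assert ((z' - z) * (al * al + be * be) = 0) by (rewrite <- E; ring).
      rewrite Hab in H. lra.
    + intros a b Ha Hb. apply in_map_iff in Hb. destruct Hb as [z [<- Hz']]. simpl.
      destruct (HB a Ha) as [Ha1 Ha2]. destruct (Hv a Ha1) as [Hnz _].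
      unfold prop, Qpt. simpl. intros E.
      assert (Hv0 : dotv al be (fst a) <> 0).
      { intros Hv0. destruct (fst a) as [p1 p2] eqn:Ep. unfold dot0, dotv, nz in *. simpl in *.
        assert (p1 * p1 + p2 * p2 = 0).
        { transitivity ((p1 * p1 + p2 * p2) * (al * al + be * be)). rewrite Hab; ring.
          transitivity ((p1 * be - p2 * al) ^ 2 + (p1 * al + p2 * be) ^ 2). ring.
          rewrite Ha2, Hv0. ring. }
        destruct Hnz; nra. }
      apply Hv0.
      assert (Xd : dotv al be (fst a) = z * dot0 al be (fst a) -
         (fst (fst a) * (- al + z * be) - snd (fst a) * (be + z * al))) by (unfold dotv, dot0; ring).
      rewrite Xd, Ha2, E; ring.
    + intros a b Ha Hb. apply in_map_iff in Ha. destruct Ha as [q [<- Hq]]. simpl.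
      destruct (HA q Hq) as [Hq1 [Hq2 Hq3]]. destruct (Hv q Hq1) as [Hnzq _].
      apply in_app_or in Hb. destruct Hb as [Hb|Hb].
      * destruct (HB b Hb) as [Hb1 Hb2]. destruct (Hv b Hb1) as [Hnzb _]. intros E.
        apply Hq2. pose proof (lin_prop be (- al) (fst b) (fst q)) as L.
        unfold dot0 in *. apply prop_sym in E. specialize (L ltac:(lra) E Hnzb). lra.
      * apply in_map_iff in Hb. destruct Hb as [z [<- Hz']]. simpl.
        destruct (HX3 z Hz') as [_ [HzT _]]. intros E. apply HzT.
        unfold T. apply in_map_iff. exists q. split; auto.
        unfold param, prop, Qpt, dot0, dotv in *. simpl in *.
        apply (Rmult_eq_reg_r (fst (fst q) * be - snd (fst q) * al)); auto.
        field_simplify; auto. lra.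
  -
    intros q Hq. apply in_app_or in Hq. destruct Hq as [Hq|Hq].
    + apply in_map_iff in Hq. destruct Hq as [q0 [<- Hq0]]. simpl.
      destruct (HA q0 Hq0) as [H1 [H2 H3]]. destruct (Hv q0 H1) as [Hnz Ho].
      split; auto. apply (order_deriv_aff F G al be); auto.
      replace (S (pred (snd q0))) with (snd q0) by lia. auto.
    + apply in_app_or in Hq. destruct Hq as [Hq|Hq].
      * destruct (HB q Hq) as [H1 H2]. destruct (Hv q H1) as [Hnz Ho].
        split; auto. apply (order_deriv_inf F G al be); auto.
      * apply in_map_iff in Hq. destruct Hq as [z [<- Hz']]. simpl.
        destruct (HX3 z Hz') as [Hf' _].
        assert (Hnz : nz (Qpt al be z)).
        { unfold nz, Qpt; simpl. destruct (Req_dec (be + z * al) 0); [right|left]; auto.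
          intros E. nra. }
        split; auto.
        destruct (factor_point n G (Qpt al be z) HG Hnz Hf') as [u [v [Huv [Hl [k [Rf [HR E]]]]]]].
        exists u, v. split; auto. split; auto. exists k, Rf. split; auto.
        intros; rewrite E; ring.
  -
    rewrite (total_split aff pts). rewrite (total_split pos (filter aff pts)).
    rewrite (total_zero (filter (fun q => negb (pos q)) (filter aff pts))).
    2:{ intros q Hq. apply filter_In in Hq. destruct Hq as [_ Hq]. unfold pos in Hq.
        destruct (Nat.ltb_spec 0 (snd q)); simpl in Hq; [discriminate|lia]. }
    fold A. fold B. rewrite !total_app.
    pose proof (total_pred A) as TP.
    assert (length T = length A) by (unfold T; apply length_map).
    unfold pX. rewrite total_one. rewrite HX2. fold pA in TP.
    rewrite <- TP. 2:{ intros q Hq; apply HA; auto. } lia.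
Qed.
Definition ind (a b : R) : nat := if Rlt_dec (a * b) 0 then 1%nat else 0%nat.

Fixpoint cnta (h : nat -> R) (a n : nat) : nat :=
  match n with
  | O => 0%nat
  | S m => (ind (h a) (h (S a)) + cnta h (S a) m)%nat
  end.

Definition hseq (d : nat) (la : nat -> R) (r : nat) (i : nat) : R :=
  if Nat.ltb i r then la i else (-1) ^ d * la 0%nat.

Lemma sc_aux_map h a n :
  sign_changes_aux (map h (seq a (S n))) = cnta h a n.
Proof.
  revert a; induction n; intros a. reflexivity.
  transitivity (ind (h a) (h (S a)) + sign_changes_aux (map h (seq (S a) (S n))))%nat.
  reflexivity. rewrite IHn. reflexivity.
Qed.

Lemma filter_all_true (f : R -> bool) l : (forall x, In x l -> f x = true) -> filter f l = l.
Proof.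
  induction l as [|a l IH]; simpl; auto. intros H. rewrite H by auto. rewrite IH; auto.
Qed.

Lemma pow_m1_nz d : (-1) ^ d <> 0.
Proof. apply pow_nonzero. lra. Qed.

Lemma sigma_eq d (la : nat -> R) r : (1 <= r)%nat -> (forall i, (i < r)%nat -> la i <> 0) ->
  sign_changes (map la (seq 0 r) ++ ((-1) ^ d * la 0%nat) :: nil) = cnta (hseq d la r) 0 r.
Proof.
  intros Hr Hnz.
  assert (E : map la (seq 0 r) ++ ((-1) ^ d * la 0%nat) :: nil = map (hseq d la r) (seq 0 (S r))).
  { rewrite seq_S, map_app. simpl. unfold hseq at 2. rewrite Nat.ltb_irrefl. f_equal.
    apply map_ext_in. intros i Hi. apply in_seq in Hi. unfold hseq.
    destruct (Nat.ltb_spec i r); [auto|lia]. }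
  unfold sign_changes. rewrite E. rewrite filter_all_true. apply sc_aux_map.
  intros x Hx. apply in_map_iff in Hx. destruct Hx as [i [<- Hi]]. apply in_seq in Hi.
  unfold hseq. destruct (Nat.ltb_spec i r).
  - destruct (Req_EM_T (la i) 0); [exfalso; apply (Hnz i); auto|auto].
  - destruct (Req_EM_T ((-1) ^ d * la 0%nat) 0) as [E0|]; auto.
    exfalso. apply Rmult_integral in E0. destruct E0. apply (pow_m1_nz d); auto. apply (Hnz 0%nat); [lia|auto].
Qed.

Lemma cnta_split h a n m : cnta h a (n + m) = (cnta h a n + cnta h (a + n) m)%nat.
Proof.
  revert a; induction n; intros a; simpl. rewrite Nat.add_0_r; auto.
  rewrite IHn. replace (S a + n)%nat with (a + S n)%nat by lia. lia.
Qed.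

Lemma cnta_ext h g a n : (forall i, (a <= i <= a + n)%nat -> h i = g i) -> cnta h a n = cnta g a n.
Proof.
  revert a; induction n; intros a H; simpl; auto.
  rewrite (H a), (H (S a)) by lia. rewrite IHn; auto. intros; apply H; lia.
Qed.

Lemma cnta_shift h a n : cnta h (S a) n = cnta (fun i => h (S i)) a n.
Proof. revert a; induction n; intros a; simpl; auto. Qed.

Lemma sign_cases a a' : 0 < a * a' -> (0 < a /\ 0 < a') \/ (a < 0 /\ a' < 0).
Proof.
  intros H. destruct (Rlt_dec 0 a); destruct (Rlt_dec 0 a').
  left; auto. right; nra. right; nra. right; nra.
Qed.

Lemma ind_sign a b a' b' : 0 < a * a' -> 0 < b * b' -> ind a b = ind a' b'.
Proof.
  intros H1 H2. unfold ind.
  destruct (sign_cases _ _ H1) as [[? ?]|[? ?]]; destruct (sign_cases _ _ H2) as [[? ?]|[? ?]];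
  destruct (Rlt_dec (a * b) 0); destruct (Rlt_dec (a' * b') 0); auto; exfalso; nra.
Qed.

Lemma cnta_sign h g a n : (forall i, (a <= i <= a + n)%nat -> 0 < h i * g i) ->
  cnta h a n = cnta g a n.
Proof.
  revert a; induction n; intros a H; simpl; auto.
  rewrite (ind_sign (h a) (h (S a)) (g a) (g (S a))) by (apply H; lia).
  rewrite IHn; auto. intros; apply H; lia.
Qed.

Lemma cnta_opp h a n : cnta (fun i => - h i) a n = cnta h a n.
Proof.
  revert a; induction n; intros a; simpl; auto. rewrite IHn. unfold ind.
  replace (- h a * - h (S a)) with (h a * h (S a)) by ring. reflexivity.
Qed.

Lemma nz_cases a : a <> 0 -> 0 < a \/ a < 0.
Proof. intros; lra. Qed.

Lemma tri a b c : a <> 0 -> b <> 0 -> c <> 0 -> (a * b < 0 \/ b * c < 0) ->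
  (ind a (- c) + 1 <= ind a b + ind b c)%nat.
Proof.
  intros Ha Hb Hc H. unfold ind.
  destruct (nz_cases _ Ha); destruct (nz_cases _ Hb); destruct (nz_cases _ Hc);
  destruct (Rlt_dec (a * - c) 0); destruct (Rlt_dec (a * b) 0); destruct (Rlt_dec (b * c) 0);
  try lia; exfalso; destruct H; nra.
Qed.

Definition goodk (h : nat -> R) (r k : nat) : Prop :=
  ((0 < k)%nat /\ (h (k - 1)%nat * h k < 0 \/ h k * h (S k) < 0)) \/
  (k = 0%nat /\ (h 0%nat * h 1%nat < 0 \/ h (r - 1)%nat * h r < 0)).

Lemma pm1 d : (-1) ^ d = 1 \/ (-1) ^ d = -1.
Proof. induction d; simpl. left; auto. destruct IHd as [E|E]; rewrite E; [right|left]; ring. Qed.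

Lemma pow_m1_pred d : (1 <= d)%nat -> (-1) ^ pred d = - (-1) ^ d.
Proof. intros. destruct d; [lia|]. simpl. ring. Qed.

Lemma comb r d k (la la' : nat -> R) : (3 <= r)%nat -> (1 <= d)%nat -> (k < r)%nat ->
  (forall i, (i < r)%nat -> la i <> 0) ->
  (forall j, (j < r - 1)%nat ->
      ((skip k j < k)%nat -> 0 < la' j * la (skip k j)) /\
      ((k < skip k j)%nat -> la' j * la (skip k j) < 0)) ->
  goodk (hseq d la r) r k ->
  (cnta (hseq (pred d) la' (pred r)) 0 (pred r) + 1 <= cnta (hseq d la r) 0 r)%nat.
Proof.
  intros Hr Hd Hk Hnz Hsg Hgood.
  set (h := hseq d la r) in *. set (h' := hseq (pred d) la' (pred r)).
  assert (Hh : forall i, (i <= r)%nat -> h i <> 0).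
  { intros i Hi. unfold h, hseq. destruct (Nat.ltb_spec i r). apply Hnz; auto.
    intros E. apply Rmult_integral in E. destruct E. apply (pow_m1_nz d); auto. apply (Hnz 0%nat); [lia|auto]. }
  assert (Hhi : forall i, (i < r)%nat -> h i = la i).
  { intros i Hi. unfold h, hseq. destruct (Nat.ltb_spec i r); [auto|lia]. }
  assert (Hhr : h r = (-1) ^ d * la 0%nat).
  { unfold h, hseq. rewrite Nat.ltb_irrefl. auto. }
  assert (Hh'i : forall j, (j < pred r)%nat -> h' j = la' j).
  { intros j Hj. unfold h', hseq. destruct (Nat.ltb_spec j (pred r)); [auto|lia]. }
  assert (Hh'r : h' (pred r) = (-1) ^ pred d * la' 0%nat).
  { unfold h', hseq. rewrite Nat.ltb_irrefl. auto. }
  assert (Hss : (-1) ^ d * (-1) ^ d = 1).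
  { rewrite <- Rpow_mult_distr. replace (-1 * -1) with 1 by ring. apply pow1. }
  assert (Hpd : (-1) ^ pred d = - (-1) ^ d) by (apply pow_m1_pred; auto).
  assert (Hla' : forall j, (j < r - 1)%nat -> la' j <> 0).
  { intros j Hj E. destruct (Hsg j Hj) as [H1 H2]. rewrite E in H1, H2.
    destruct (Nat.lt_total (skip k j) k) as [L|[L|L]].
    - specialize (H1 L); lra.
    - apply (skip_ne k j); auto.
    - specialize (H2 L); lra. }
  destruct (Nat.eq_dec k 0) as [Hk0|Hk0].
  -
    subst k. destruct Hgood as [[Hc _]|[_ Hgood]]; [lia|].
    assert (Hs : forall j, skip 0 j = S j) by (intros; apply skip_ge; lia).
    set (m := (r - 2)%nat).
    replace (pred r) with (m + 1)%nat by (unfold m; lia).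
    rewrite cnta_split.
    assert (Eh : cnta h 0 r = cnta h 0 (1 + m + 1)) by (f_equal; unfold m; lia).
    rewrite Eh, !cnta_split.
    assert (E1 : cnta h' 0 m = cnta h (0 + 1) m).
    { simpl. rewrite cnta_shift. symmetry.
      transitivity (cnta (fun i => - h (S i)) 0 m).
      - symmetry. apply (cnta_opp (fun i => h (S i))).
      - apply cnta_sign. intros i Hi. simpl in Hi. rewrite !Hhi by (unfold m in *; lia).
        destruct (Hsg i ltac:(unfold m in *; lia)) as [_ H2]. rewrite Hs in H2.
        specialize (H2 ltac:(lia)). rewrite Hh'i by (unfold m in *; lia). nra. }
    rewrite E1. simpl. rewrite !Nat.add_0_r.
    replace (m + 1)%nat with (S m) by lia. replace (S (m + 1)) with r by (unfold m; lia).
    replace (S m) with (r - 1)%nat by (unfold m; lia).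
    set (a := h (r - 1)%nat). set (b := h r). set (c := (-1) ^ d * la 1%nat).
    assert (Ha : a <> 0) by (apply Hh; lia). assert (Hb : b <> 0) by (apply Hh; lia).
    assert (Hc : c <> 0).
    { unfold c. intros E. apply Rmult_integral in E. destruct E. apply (pow_m1_nz d); auto. apply (Hnz 1%nat); [lia|auto]. }
    assert (Hl0 : 0 < la' 0%nat * la 1%nat * -1).
    { destruct (Hsg 0%nat ltac:(lia)) as [_ H2]. rewrite Hs in H2. specialize (H2 ltac:(lia)). lra. }
    assert (Hlm : 0 < la' m * la (r - 1)%nat * -1).
    { destruct (Hsg m ltac:(unfold m; lia)) as [_ H2]. rewrite Hs in H2.
      replace (S m) with (r - 1)%nat in H2 by (unfold m; lia). specialize (H2 ltac:(lia)). lra. }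
    assert (I1 : ind (h' m) (h' (r - 1)%nat) = ind a (- c)).
    { transitivity (ind (- a) c).
      2:{ unfold ind. replace (- a * c) with (a * - c) by ring. reflexivity. }
      apply ind_sign.
      - rewrite Hh'i by (unfold m; lia). unfold a. rewrite Hhi by lia. nra.
      - replace (r - 1)%nat with (pred r) by lia. rewrite Hh'r, Hpd. unfold c.
        destruct (pm1 d) as [S1|S1]; rewrite S1; nra. }
    assert (I2 : ind (h 0%nat) (h 1%nat) = ind b c).
    { unfold b, c. rewrite Hhr, !Hhi by lia. unfold ind.
      replace ((-1) ^ d * la 0%nat * ((-1) ^ d * la 1%nat)) with (la 0%nat * la 1%nat).
      reflexivity. transitivity ((-1) ^ d * (-1) ^ d * (la 0%nat * la 1%nat)).
      rewrite Hss; ring. ring. }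
    rewrite I1, I2. pose proof (tri a b c Ha Hb Hc) as T3.
    assert (a * b < 0 \/ b * c < 0).
    { destruct Hgood as [G|G]; [right|left].
      - unfold b, c. rewrite Hhr. rewrite Hhi in G by lia. rewrite Hhi in G by lia.
        destruct (pm1 d) as [S1|S1]; rewrite S1 in *; nra.
      - unfold a, b. exact G. }
    specialize (T3 H). replace (S (r - 1)) with r by lia. fold b. lia.
  -
    destruct Hgood as [[_ Hgood]|[Hc _]]; [|lia].
    assert (Hlo : forall i, (i < k)%nat -> 0 < h' i * h i).
    { intros i Hi. rewrite Hh'i by lia. rewrite Hhi by lia.
      destruct (Hsg i ltac:(lia)) as [H1 _]. rewrite skip_lt in H1 by lia. apply H1; lia. }
    assert (Hhi2 : forall i, (k <= i <= pred r)%nat -> 0 < h' i * - h (S i)).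
    { intros i Hi. destruct (Nat.eq_dec i (pred r)) as [Ei|Ei].
      - subst i. rewrite Hh'r. replace (S (pred r)) with r by lia. rewrite Hhr, Hpd.
        destruct (Hsg 0%nat ltac:(lia)) as [H1 _]. rewrite skip_lt in H1 by lia.
        specialize (H1 ltac:(lia)).
        destruct (pm1 d) as [S1|S1]; rewrite S1; nra.
      - rewrite Hh'i by lia. rewrite Hhi by lia.
        destruct (Hsg i ltac:(lia)) as [_ H2]. rewrite skip_ge in H2 by lia.
        specialize (H2 ltac:(lia)). lra. }
    replace (pred r) with ((k - 1) + 1 + (r - 1 - k))%nat by lia.
    rewrite !cnta_split.
    assert (Eh : cnta h 0 r = cnta h 0 ((k - 1) + 2 + (r - 1 - k))) by (f_equal; lia).
    rewrite Eh, !cnta_split.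
    assert (E1 : cnta h' 0 (k - 1) = cnta h 0 (k - 1)).
    { apply cnta_sign. intros i Hi. apply Hlo. lia. }
    assert (E2 : cnta h' (0 + (k - 1 + 1)) (r - 1 - k) = cnta h (0 + (k - 1 + 2)) (r - 1 - k)).
    { replace (0 + (k - 1 + 1))%nat with k by lia. replace (0 + (k - 1 + 2))%nat with (S k) by lia.
      rewrite cnta_shift. transitivity (cnta (fun i => - h (S i)) k (r - 1 - k)).
      - apply cnta_sign. intros i Hi. apply Hhi2. lia.
      - apply (cnta_opp (fun i => h (S i))). }
    rewrite E1, E2. simpl. rewrite !Nat.add_0_r.
    replace (S (k - 1)) with k by lia.
    assert (I1 : ind (h' (k - 1)%nat) (h' k) = ind (h (k - 1)%nat) (- h (S k))).
    { apply ind_sign. apply Hlo; lia. apply Hhi2; lia. }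
    rewrite I1.
    pose proof (tri (h (k - 1)%nat) (h k) (h (S k))) as T3.
    specialize (T3 ltac:(apply Hh; lia) ltac:(apply Hh; lia) ltac:(apply Hh; lia) Hgood). lia.
Qed.
Lemma theta_lt (th : nat -> R) r : (forall k, (S k < r)%nat -> th k < th (S k)) ->
  forall i j, (i < j)%nat -> (j < r)%nat -> th i < th j.
Proof.
  intros H i j Hij. induction Hij; intros Hr.
  - apply H; auto.
  - apply Rlt_trans with (th m). apply IHHij; lia. apply H; lia.
Qed.

Lemma sin_nz x : - PI < x < PI -> x <> 0 -> sin x <> 0.
Proof.
  intros [H1 H2] H3. destruct (Rlt_dec 0 x).
  - apply Rgt_not_eq. apply sin_gt_0; auto.
  - apply Rlt_not_eq. apply sin_lt_0_var; lra.
Qed.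

Lemma sin_diff_pos (th : nat -> R) r :
  (forall k, (k < r)%nat -> - (PI / 2) < th k <= PI / 2) ->
  (forall k, (S k < r)%nat -> th k < th (S k)) ->
  forall i j, (i < j)%nat -> (j < r)%nat -> 0 < sin (th j - th i).
Proof.
  intros Hrg Hs i j Hij Hj. pose proof (theta_lt th r Hs i j Hij Hj).
  pose proof (Hrg i ltac:(lia)). pose proof (Hrg j Hj).
  apply sin_gt_0; lra.
Qed.

Lemma lin_indep u v u' v' p1 p2 : u * v' - v * u' <> 0 ->
  u * p1 + v * p2 = 0 -> u' * p1 + v' * p2 = 0 -> p1 = 0 /\ p2 = 0.
Proof.
  intros D H1 H2. split.
  - apply (Rmult_eq_reg_l (u * v' - v * u')); auto.
    replace ((u * v' - v * u') * p1) with (v' * (u * p1 + v * p2) - v * (u' * p1 + v' * p2)) by ring.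
    rewrite H1, H2; ring.
  - apply (Rmult_eq_reg_l (u * v' - v * u')); auto.
    replace ((u * v' - v * u') * p2) with (u * (u' * p1 + v' * p2) - u' * (u * p1 + v * p2)) by ring.
    rewrite H1, H2; ring.
Qed.

Lemma order_le F P e e' : order F P e -> (e' <= e)%nat -> order F P e'.
Proof.
  intros H Hle. induction Hle; auto. apply IHHle. apply order_dec; auto.
Qed.

Lemma no_zero_total F pts : (forall P, nz P -> F (fst P) (snd P) <> 0) ->
  valid F pts -> total pts = 0%nat.
Proof.
  intros H [_ Hv]. apply total_zero. intros q Hq. destruct (Hv q Hq) as [Hnz Ho].
  destruct (snd q) as [|e] eqn:E; auto. exfalso. apply (H (fst q) Hnz).
  apply (order_zero F (fst q) (S e)); auto. lia.
Qed.

Lemma sum_nonneg (f : nat -> R) N : (forall i, (i <= N)%nat -> 0 <= f i) -> 0 <= sum_f_R0 f N.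
Proof.
  induction N; intros H; simpl. apply H; lia.
  assert (0 <= sum_f_R0 f N) by (apply IHN; intros; apply H; lia).
  pose proof (H (S N) (le_n _)). lra.
Qed.

Lemma sum_pos (f : nat -> R) N : (forall i, (i <= N)%nat -> 0 <= f i) ->
  (exists i, (i <= N)%nat /\ 0 < f i) -> 0 < sum_f_R0 f N.
Proof.
  induction N; intros H [i [Hi Hp]].
  - simpl. replace i with 0%nat in Hp by lia. auto.
  - rewrite tech5. destruct (Nat.eq_dec i (S N)).
    + subst. pose proof (sum_nonneg f N ltac:(intros; apply H; lia)). lra.
    + assert (0 < sum_f_R0 f N) by (apply IHN; [intros; apply H; lia|exists i; split; [lia|auto]]).
      pose proof (H (S N) (le_n _)). lra.
Qed.

Lemma even_pow_nonneg d x : (-1) ^ d = 1 -> 0 <= x ^ d /\ (x <> 0 -> 0 < x ^ d).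
Proof.
  intros Hd. destruct (Nat.Even_or_Odd d) as [[m Hm]|[m Hm]]; subst d.
  - rewrite pow_mult. split. apply pow_le. nra. intros. apply pow_lt. nra.
  - exfalso. replace (2 * m + 1)%nat with (S (2 * m)) in Hd by lia. rewrite pow_1_odd in Hd. lra.
Qed.

Lemma const_line F G al be : DD F G al be -> (forall x y, G x y = 0) ->
  forall x y s, F (x + s * al) (y + s * be) = F x y.
Proof.
  intros HD HG x y s.
  set (g := fun s => F (x + s * al) (y + s * be)).
  assert (Hg : forall c, derivable_pt_lim g c 0).
  { intros c. pose proof (HD x y c) as D. rewrite HG in D. exact D. }
  assert (E0 : g 0 = F x y) by (unfold g; f_equal; ring).
  change (g s = F x y). rewrite <- E0.
  destruct (Rtotal_order 0 s) as [Hs|[Hs|Hs]].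
  - destruct (MVT_cor2 g (fun _ => 0) 0 s Hs) as [c [Hc _]]. intros; apply Hg. lra.
  - subst; auto.
  - destruct (MVT_cor2 g (fun _ => 0) s 0 Hs) as [c [Hc _]]. intros; apply Hg. lra.
Qed.

Lemma pow_strict a b n : 0 <= a < b -> (1 <= n)%nat -> a ^ n < b ^ n.
Proof.
  intros [H1 H2] Hn. induction n; [lia|]. destruct n.
  - simpl; lra.
  - assert (a ^ S n < b ^ S n) by (apply IHn; lia).
    assert (0 <= a ^ S n) by (apply pow_le; auto).
    simpl in *. nra.
Qed.

Lemma pow_eq_abs x y n : (1 <= n)%nat -> x ^ n = y ^ n -> Rabs x = Rabs y.
Proof.
  intros Hn E. assert (E2 : Rabs x ^ n = Rabs y ^ n) by (rewrite !RPow_abs, E; auto).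
  destruct (Rtotal_order (Rabs x) (Rabs y)) as [L|[L|L]]; auto.
  - pose proof (pow_strict (Rabs x) (Rabs y) n ltac:(split; [apply Rabs_pos|auto]) Hn). lra.
  - pose proof (pow_strict (Rabs y) (Rabs x) n ltac:(split; [apply Rabs_pos|auto]) Hn). lra.
Qed.

Lemma abs_eq_cases x y : Rabs x = Rabs y -> x = y \/ x = - y.
Proof.
  unfold Rabs. destruct (Rcase_abs x); destruct (Rcase_abs y); intros; lra.
Qed.

Lemma pow_odd_inj x y d : (-1) ^ d = -1 -> x ^ d = y ^ d -> x = y.
Proof.
  intros Hd E. assert (Hn : (1 <= d)%nat) by (destruct d; [simpl in Hd; lra|lia]).
  destruct (abs_eq_cases _ _ (pow_eq_abs x y d Hn E)) as [H|H]; auto.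
  subst x. replace (- y) with (-1 * y) in E by ring. rewrite Rpow_mult_distr, Hd in E.
  assert (y ^ d = 0) by lra. assert (y = 0).
  { destruct (Req_dec y 0); auto. exfalso. apply (pow_nonzero y d); auto. }
  subst; ring.
Qed.

Lemma Spow_origin d th la r : (1 <= d)%nat -> Spow d th la r 0 0 = 0.
Proof.
  intros Hd. unfold Spow. induction (r - 1)%nat.
  - simpl. destruct d; [lia|]. simpl. ring.
  - simpl. rewrite IHn. destruct d; [lia|]. simpl. ring.
Qed.
Lemma cnta_zero h a n : cnta h a n = 0%nat -> forall i, (a <= i < a + n)%nat -> ~ (h i * h (S i) < 0).
Proof.
  revert a; induction n; intros a H i Hi; [lia|]. simpl in H.
  unfold ind in H. destruct (Rlt_dec (h a * h (S a)) 0); [lia|].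
  destruct (Nat.eq_dec i a); [subst; auto|]. apply (IHn (S a)); [lia|lia].
Qed.

Lemma lk_indep (th : nat -> R) r i j :
  (forall k, (k < r)%nat -> - (PI / 2) < th k <= PI / 2) ->
  (forall k, (S k < r)%nat -> th k < th (S k)) -> (i < j)%nat -> (j < r)%nat ->
  forall p1 p2, cos (th i) * p1 - sin (th i) * p2 = 0 -> cos (th j) * p1 - sin (th j) * p2 = 0 ->
  p1 = 0 /\ p2 = 0.
Proof.
  intros Hrg Hs Hij Hj p1 p2 H1 H2.
  pose proof (sin_diff_pos th r Hrg Hs i j Hij Hj) as S.
  apply (lin_indep (cos (th i)) (- sin (th i)) (cos (th j)) (- sin (th j))).
  - rewrite sin_minus in S. intros E. lra.
  - rewrite <- H1; ring.
  - rewrite <- H2; ring.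
Qed.

Lemma definite d th la r : (2 <= r)%nat ->
  (forall k, (k < r)%nat -> - (PI / 2) < th k <= PI / 2) ->
  (forall k, (S k < r)%nat -> th k < th (S k)) ->
  (forall k, (k < r)%nat -> la k <> 0) ->
  cnta (hseq d la r) 0 r = 0%nat ->
  forall P, nz P -> Spow d th la r (fst P) (snd P) <> 0.
Proof.
  intros Hr Hrg Hs Hnz Hc P HP.
  set (h := hseq d la r) in *.
  assert (Hhi : forall i, (i < r)%nat -> h i = la i).
  { intros i Hi. unfold h, hseq. destruct (Nat.ltb_spec i r); [auto|lia]. }
  assert (Hhr : h r = (-1) ^ d * la 0%nat).
  { unfold h, hseq. rewrite Nat.ltb_irrefl. auto. }
  pose proof (cnta_zero h 0 r Hc) as Z.
  assert (Hsame : forall i, (i < r)%nat -> 0 < la i * la 0%nat).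
  { induction i; intros Hi.
    - assert (la 0%nat <> 0) by (apply Hnz; lia). nra.
    - specialize (IHi ltac:(lia)). specialize (Z i ltac:(lia)).
      rewrite !Hhi in Z by lia.
      assert (la (S i) <> 0) by (apply Hnz; lia). assert (la i <> 0) by (apply Hnz; lia).
      assert (0 < la i * la (S i)) by (destruct (Rtotal_order (la i * la (S i)) 0) as [?|[?|?]]; [contradiction|nra|auto]).
      destruct (nz_cases (la i) ltac:(auto)); nra. }
  assert (Hd : (-1) ^ d = 1).
  { specialize (Z (r - 1)%nat ltac:(lia)). replace (S (r - 1)) with r in Z by lia.
    rewrite Hhr, Hhi in Z by lia. pose proof (Hsame (r - 1)%nat ltac:(lia)).
    assert (la 0%nat <> 0) by (apply Hnz; lia).
    destruct (pm1 d) as [E|E]; auto. rewrite E in Z. exfalso. apply Z.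
    destruct (nz_cases (la 0%nat) ltac:(auto)); nra. }
  intros E.
  assert (Hpos : 0 < la 0%nat * Spow d th la r (fst P) (snd P)).
  { unfold Spow. rewrite scal_sum. apply sum_pos.
    - intros i Hi. pose proof (Hsame i ltac:(lia)).
      destruct (even_pow_nonneg d (cos (th i) * fst P - sin (th i) * snd P) Hd) as [G _]. nra.
    - destruct (Req_dec (cos (th 0%nat) * fst P - sin (th 0%nat) * snd P) 0) as [E0|E0].
      + exists 1%nat. split; [lia|]. pose proof (Hsame 1%nat ltac:(lia)).
        destruct (Req_dec (cos (th 1%nat) * fst P - sin (th 1%nat) * snd P) 0) as [E1|E1].
        * exfalso. destruct (lk_indep th r 0 1 Hrg Hs ltac:(lia) ltac:(lia) _ _ E0 E1).
          destruct HP; auto.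
        * destruct (even_pow_nonneg d (cos (th 1%nat) * fst P - sin (th 1%nat) * snd P) Hd) as [_ G]. specialize (G E1). nra.
      + exists 0%nat. split; [lia|]. pose proof (Hsame 0%nat ltac:(lia)).
        destruct (even_pow_nonneg d (cos (th 0%nat) * fst P - sin (th 0%nat) * snd P) Hd) as [_ G]. specialize (G E0). nra. }
  rewrite E in Hpos. lra.
Qed.
Lemma total_ones l : (forall q, In q l -> snd q = 1%nat) -> total l = length l.
Proof. induction l as [|a l IH]; simpl; auto. intros H. rewrite H, IH; auto. Qed.

Lemma base2 d th la pts : (1 <= d)%nat ->
  (forall k, (k < 2)%nat -> - (PI / 2) < th k <= PI / 2) ->
  (forall k, (S k < 2)%nat -> th k < th (S k)) ->
  (forall k, (k < 2)%nat -> la k <> 0) ->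
  valid (Spow d th la 2) pts ->
  (1 <= cnta (hseq d la 2) 0 2)%nat ->
  (total pts <= cnta (hseq d la 2) 0 2)%nat.
Proof.
  intros Hd Hrg Hs Hnz [Hpw Hv] Hsig.
  set (F := Spow d th la 2).
  set (L0 := fun P : R * R => cos (th 0%nat) * fst P - sin (th 0%nat) * snd P).
  set (L1 := fun P : R * R => cos (th 1%nat) * fst P - sin (th 1%nat) * snd P).
  assert (FE : forall P, F (fst P) (snd P) = la 0%nat * (L0 P) ^ d + la 1%nat * (L1 P) ^ d).
  { intros P. unfold F, Spow, L0, L1. simpl. reflexivity. }
  assert (Hsn : 0 < sin (th 1%nat - th 0%nat)) by (apply (sin_diff_pos th 2); auto).
  assert (Hl0 : la 0%nat <> 0) by (apply Hnz; lia).
  assert (Hl1 : la 1%nat <> 0) by (apply Hnz; lia).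
  assert (Hzero : forall P, nz P -> F (fst P) (snd P) = 0 -> L0 P <> 0 /\ L1 P <> 0).
  { intros P HP Hz. rewrite FE in Hz.
    assert (Hind : ~ (L0 P = 0 /\ L1 P = 0)).
    { intros [A B]. destruct (lk_indep th 2 0 1 Hrg Hs ltac:(lia) ltac:(lia) _ _ A B).
      destruct HP; auto. }
    split; intros E.
    - apply Hind. split; auto. rewrite E in Hz. destruct d; [lia|]. simpl in Hz.
      rewrite Rmult_0_l, Rmult_0_r, Rplus_0_l in Hz. apply Rmult_integral in Hz.
      destruct Hz as [Hz|Hz]; [contradiction|]. destruct (Req_dec (L1 P) 0); auto.
      exfalso. apply (pow_nonzero (L1 P) (S d)); auto.
    - apply Hind. split; auto. rewrite E in Hz. destruct d; [lia|]. simpl in Hz.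
      rewrite Rmult_0_l, Rmult_0_r, Rplus_0_r in Hz. apply Rmult_integral in Hz.
      destruct Hz as [Hz|Hz]; [contradiction|]. destruct (Req_dec (L0 P) 0); auto.
      exfalso. apply (pow_nonzero (L0 P) (S d)); auto. }
  assert (Hnd : forall P, nz P -> F (fst P) (snd P) = 0 -> ~ order F P 2).
  { intros P HP Hz [u [v [Huv [Hl [k [Rf [HR E]]]]]]].
    destruct (Hzero P HP Hz) as [N0 _].
    set (al := sin (th 1%nat)). set (be := cos (th 1%nat)).
    destruct (deriv_lpow u v 2 k Rf al be HR) as [GR [_ [_ D]]].
    specialize (D (fst P) (snd P)). rewrite Hl in D.
    pose proof (sum_deriv d 1 th la (fst P) (snd P) al be 0) as D2.
    assert (Heq : forall s, (u * (fst P + s * al) + v * (snd P + s * be)) ^ 2 * Rf (fst P + s * al) (snd P + s * be)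
        = sum_f_R0 (fun k0 => la k0 * (cos (th k0) * (fst P + s * al) - sin (th k0) * (snd P + s * be)) ^ d) 1).
    { intros s. rewrite <- E. unfold F, Spow. simpl. reflexivity. }
    pose proof (uniqueness_limite _ 0 _ _ D2 (dpl_ext _ _ _ _ Heq D)) as U.
    replace (fst P + 0 * al) with (fst P) in U by ring.
    replace (snd P + 0 * be) with (snd P) in U by ring.
    simpl in U. unfold al, be in U.
    replace (cos (th 1%nat) * sin (th 1%nat) - sin (th 1%nat) * cos (th 1%nat)) with 0 in U by ring.
    replace (cos (th 0%nat) * sin (th 1%nat) - sin (th 0%nat) * cos (th 1%nat))
      with (sin (th 1%nat - th 0%nat)) in U by (rewrite sin_minus; ring).
    assert (INR d <> 0) by (apply not_0_INR; lia).
    assert (L0 P ^ pred d <> 0) by (apply pow_nonzero; auto).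
    unfold L0 in *.
    assert (la 0%nat * (INR d * (cos (th 0%nat) * fst P - sin (th 0%nat) * snd P) ^ pred d *
               sin (th 1%nat - th 0%nat)) = 0) by lra.
    repeat (apply Rmult_integral in H1; destruct H1 as [H1|H1]); try contradiction; lra. }
  set (ka := fun P => L0 P / L1 P).
  assert (Hka : forall P Q, nz P -> nz Q -> F (fst P) (snd P) = 0 -> F (fst Q) (snd Q) = 0 ->
                 ka P ^ d = ka Q ^ d).
  { intros P Q HP HQ ZP ZQ. destruct (Hzero P HP ZP) as [P0 P1]. destruct (Hzero Q HQ ZQ) as [Q0 Q1].
    rewrite FE in ZP, ZQ. unfold ka, Rdiv. rewrite !Rpow_mult_distr, !pow_inv.
    assert (X : L0 P ^ d * L1 Q ^ d = L0 Q ^ d * L1 P ^ d).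
    { assert (ZP' : la 0%nat * L0 P ^ d = - (la 1%nat * L1 P ^ d)) by lra.
      assert (ZQ' : la 0%nat * L0 Q ^ d = - (la 1%nat * L1 Q ^ d)) by lra.
      apply (Rmult_eq_reg_l (la 0%nat)); auto.
      transitivity ((la 0%nat * L0 P ^ d) * L1 Q ^ d). ring. rewrite ZP'.
      transitivity ((la 0%nat * L0 Q ^ d) * L1 P ^ d). 2: ring. rewrite ZQ'. ring. }
    assert (L1 P ^ d <> 0) by (apply pow_nonzero; auto).
    assert (L1 Q ^ d <> 0) by (apply pow_nonzero; auto).
    apply (Rmult_eq_reg_r (L1 P ^ d * L1 Q ^ d)). 2: apply Rmult_integral_contrapositive; auto.
    transitivity (L0 P ^ d * L1 Q ^ d). field; auto. rewrite X. field; auto. }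
  assert (Hkp : forall P Q, nz P -> nz Q -> F (fst P) (snd P) = 0 -> F (fst Q) (snd Q) = 0 ->
                 ka P = ka Q -> prop P Q).
  { intros P Q HP HQ ZP ZQ E. destruct (Hzero P HP ZP) as [P0 P1]. destruct (Hzero Q HQ ZQ) as [Q0 Q1].
    unfold ka in E. assert (X : L0 P * L1 Q = L0 Q * L1 P).
    { transitivity ((L0 P / L1 P) * (L1 P * L1 Q)). field; auto. rewrite E. field; auto. }
    assert (Y0 : (fst P * snd Q - snd P * fst Q) * sin (th 1%nat - th 0%nat) = - (L0 P * L1 Q - L0 Q * L1 P))
      by (unfold L0, L1; rewrite sin_minus; ring).
    assert (Y : (fst P * snd Q - snd P * fst Q) * sin (th 1%nat - th 0%nat) = 0) by (rewrite Y0, X; ring).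
    unfold prop.
    apply Rmult_integral in Y. destruct Y; auto. lra. }
  set (pos := fun q : R * R * nat => Nat.ltb 0 (snd q)).
  set (Z := filter pos pts).
  assert (HZ : forall q, In q Z -> nz (fst q) /\ F (fst (fst q)) (snd (fst q)) = 0 /\ snd q = 1%nat).
  { intros q Hq. apply filter_In in Hq. destruct Hq as [Hq Hp]. unfold pos in Hp.
    apply Nat.ltb_lt in Hp. destruct (Hv q Hq) as [Hnzq Ho].
    assert (Hz : F (fst (fst q)) (snd (fst q)) = 0) by (apply (order_zero F (fst q) (snd q)); auto).
    split; auto. split; auto. destruct (Nat.eq_dec (snd q) 1); auto.
    exfalso. apply (Hnd (fst q) Hnzq Hz). apply (order_le F (fst q) (snd q)); auto. lia. }
  assert (Ht : total pts = length Z).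
  { rewrite (total_split pos pts). rewrite (total_zero (filter (fun q => negb (pos q)) pts)).
    rewrite Nat.add_0_r. apply total_ones. intros; apply HZ; auto.
    intros q Hq. apply filter_In in Hq. destruct Hq as [_ Hq]. unfold pos in Hq.
    destruct (Nat.ltb_spec 0 (snd q)); simpl in Hq; [discriminate|lia]. }
  assert (HpwZ : pw Z) by (apply pw_filter; auto).
  rewrite Ht.
  assert (Hsig2 : cnta (hseq d la 2) 0 2 = (ind (la 0%nat) (la 1%nat) + ind (la 1%nat) ((-1) ^ d * la 0%nat))%nat).
  { simpl. unfold hseq. simpl. lia. }
  destruct (pm1 d) as [Ed|Ed].
  -
    assert (I : ind (la 1%nat) ((-1) ^ d * la 0%nat) = ind (la 0%nat) (la 1%nat)).
    { rewrite Ed. unfold ind. replace (la 1%nat * (1 * la 0%nat)) with (la 0%nat * la 1%nat) by ring. auto. }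
    rewrite Hsig2, I in *. assert (ind (la 0%nat) (la 1%nat) = 1%nat).
    { unfold ind in *. destruct (Rlt_dec (la 0%nat * la 1%nat) 0); lia. }
    rewrite H.
    destruct Z as [|q1 [|q2 [|q3 Z']]]; simpl; try lia.
    exfalso. simpl in HpwZ. destruct HpwZ as [H12 [H23 _]].
    destruct (HZ q1 ltac:(simpl; auto)) as [N1 [Z1 _]].
    destruct (HZ q2 ltac:(simpl; auto)) as [N2 [Z2 _]].
    destruct (HZ q3 ltac:(simpl; auto)) as [N3 [Z3 _]].
    pose proof (Hka _ _ N1 N2 Z1 Z2) as K12. pose proof (Hka _ _ N1 N3 Z1 Z3) as K13.
    destruct (abs_eq_cases _ _ (pow_eq_abs _ _ d Hd K12)) as [E12|E12].
    { apply (H12 q2); simpl; auto. }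
    destruct (abs_eq_cases _ _ (pow_eq_abs _ _ d Hd K13)) as [E13|E13].
    { apply (H12 q3); simpl; auto. }
    apply (H23 q3); simpl; auto. apply Hkp; auto. lra.
  -
    rewrite Hsig2 in *.
    destruct Z as [|q1 [|q2 Z']]; simpl; try lia.
    exfalso. simpl in HpwZ. destruct HpwZ as [H12 _].
    destruct (HZ q1 ltac:(simpl; auto)) as [N1 [Z1 _]].
    destruct (HZ q2 ltac:(simpl; auto)) as [N2 [Z2 _]].
    apply (H12 q2); simpl; auto. apply Hkp; auto.
    apply (pow_odd_inj _ _ d Ed). apply Hka; auto.
Qed.
Lemma cnta_pos h a n : (1 <= cnta h a n)%nat -> exists i, (a <= i < a + n)%nat /\ h i * h (S i) < 0.
Proof.
  revert a; induction n; intros a H; simpl in H; [lia|].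
  unfold ind in H. destruct (Rlt_dec (h a * h (S a)) 0).
  - exists a. split; [lia|auto].
  - destruct (IHn (S a) ltac:(lia)) as [i [Hi Hh]]. exists i. split; [lia|auto].
Qed.

Lemma Spow0_const th la r x y x' y' : Spow 0 th la r x y = Spow 0 th la r x' y'.
Proof. unfold Spow. apply sum_eq. intros; simpl; ring. Qed.

Lemma two_dirs F G1 G2 a1 b1 a2 b2 : DD F G1 a1 b1 -> DD F G2 a2 b2 ->
  (forall x y, G1 x y = 0) -> (forall x y, G2 x y = 0) -> a1 * b2 - b1 * a2 <> 0 ->
  F 0 0 = 0 -> forall x y, F x y = 0.
Proof.
  intros H1 H2 Z1 Z2 D F0 x y.
  set (s := (x * b2 - y * a2) / (a1 * b2 - b1 * a2)).
  set (t := (y * a1 - x * b1) / (a1 * b2 - b1 * a2)).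
  replace x with ((0 + t * a2) + s * a1) by (unfold s, t; field; auto).
  replace y with ((0 + t * b2) + s * b1) by (unfold s, t; field; auto).
  rewrite (const_line F G1 a1 b1 H1 Z1). rewrite (const_line F G2 a2 b2 H2 Z2). auto.
Qed.

Lemma main : forall r, (2 <= r)%nat -> forall d th la pts,
  (forall k, (k < r)%nat -> - (PI / 2) < th k <= PI / 2) ->
  (forall k, (S k < r)%nat -> th k < th (S k)) ->
  (forall k, (k < r)%nat -> la k <> 0) ->
  (exists x y, Spow d th la r x y <> 0) ->
  valid (Spow d th la r) pts ->
  (total pts <= cnta (hseq d la r) 0 r)%nat.
Proof.
  induction r as [|r IH]; intros Hr d th la pts Hrg Hs Hnz [x0 [y0 Hne]] Hval; [lia|].
  destruct d as [|d'].
  { rewrite (no_zero_total (Spow 0 th la (S r)) pts); [lia| |auto]. intros P _. rewrite (Spow0_const _ _ _ _ _ x0 y0). auto. }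
  set (d := S d') in *.
  assert (Hd : (1 <= d)%nat) by (unfold d; lia).
  destruct (Nat.eq_dec (cnta (hseq d la (S r)) 0 (S r)) 0) as [Hc0|Hc0].
  { rewrite (no_zero_total (Spow d th la (S r)) pts); [lia| |auto]. apply (definite d th la (S r)); auto. }
  destruct (Nat.eq_dec r 1) as [Hr1|Hr1].
  { subst r. apply (base2 d th la pts); auto. lia. }
  assert (Hr3 : (3 <= S r)%nat) by lia.
  set (h := hseq d la (S r)) in *.
  destruct (cnta_pos h 0 (S r) ltac:(lia)) as [j [Hj Hhj]].
  set (k1 := j). set (k2 := if Nat.ltb (S j) (S r) then S j else 0%nat).
  assert (Hk1 : (k1 < S r)%nat) by (unfold k1; lia).
  assert (Hk2 : (k2 < S r)%nat) by (unfold k2; destruct (Nat.ltb_spec (S j) (S r)); lia).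
  assert (Hk12 : k1 <> k2) by (unfold k1, k2; destruct (Nat.ltb_spec (S j) (S r)); lia).
  assert (G1 : goodk h (S r) k1).
  { unfold goodk, k1. destruct (Nat.eq_dec j 0) as [E|E].
    - right. subst j. split; auto.
    - left. split; [lia|right; auto]. }
  assert (G2 : goodk h (S r) k2).
  { unfold goodk, k2. destruct (Nat.ltb_spec (S j) (S r)).
    - left. split; [lia|left]. replace (S j - 1)%nat with j by lia. auto.
    - right. split; auto. right. replace (S r - 1)%nat with j by lia. replace (S r) with (S j) by lia. auto. }
  set (GG := fun k => Spow (pred d) (th' th k) (la' d th la k) (pred (S r))).
  assert (HDD : forall k, (k < S r)%nat -> DD (Spow d th la (S r)) (GG k) (sin (th k)) (cos (th k))).
  { intros k Hk x y s. apply Spow_deriv_k; auto. }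
  assert (Hex : exists k, (k < S r)%nat /\ goodk h (S r) k /\ exists x y, GG k x y <> 0).
  { destruct (classic (exists x y, GG k1 x y <> 0)) as [E1|E1].
    { exists k1; auto. }
    destruct (classic (exists x y, GG k2 x y <> 0)) as [E2|E2].
    { exists k2; auto. }
    exfalso. apply Hne.
    apply (two_dirs _ (GG k1) (GG k2) (sin (th k1)) (cos (th k1)) (sin (th k2)) (cos (th k2))).
    - apply HDD; auto.
    - apply HDD; auto.
    - intros x y. destruct (Req_dec (GG k1 x y) 0); auto. exfalso; apply E1; eauto.
    - intros x y. destruct (Req_dec (GG k2 x y) 0); auto. exfalso; apply E2; eauto.
    - replace (sin (th k1) * cos (th k2) - cos (th k1) * sin (th k2)) with (sin (th k1 - th k2))
        by (rewrite sin_minus; ring).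
      destruct (Nat.lt_total k1 k2) as [L|[L|L]]; [|contradiction|].
      + pose proof (sin_diff_pos th (S r) Hrg Hs k1 k2 L Hk2).
        rewrite <- (Ropp_involutive (th k1 - th k2)), sin_neg.
        replace (- (th k1 - th k2)) with (th k2 - th k1) by ring. lra.
      + pose proof (sin_diff_pos th (S r) Hrg Hs k2 k1 L Hk1). lra.
    - apply Spow_origin; auto. }
  destruct Hex as [k [Hk [Hgk [x1 [y1 Hx1]]]]].
  assert (Hab : sin (th k) * sin (th k) + cos (th k) * cos (th k) = 1).
  { pose proof (sin2_cos2 (th k)) as S2. unfold Rsqr in S2. lra. }
  destruct (step _ _ _ _ (pred d) Hab (HDD k Hk) (Spow_form _ _ _ _) pts Hval) as [pts' [Hv' Ht']].
  assert (Hth' : forall j, (j < r)%nat -> (skip k j < S r)%nat).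
  { intros j' Hj'. unfold skip. destruct (Nat.ltb_spec j' k); lia. }
  assert (Hsin : forall j, (j < r)%nat -> sin (th k - th (skip k j)) <> 0).
  { intros j' Hj'. pose proof (Hth' j' Hj'). pose proof (skip_ne k j').
    apply sin_nz.
    - pose proof (Hrg k Hk). pose proof (Hrg (skip k j') ltac:(auto)). lra.
    - intros E. destruct (Nat.lt_total (skip k j') k) as [L|[L|L]]; [|contradiction|].
      + pose proof (theta_lt th (S r) Hs _ _ L Hk). lra.
      + pose proof (theta_lt th (S r) Hs _ _ L ltac:(auto)). lra. }
  assert (IHa := IH ltac:(lia) (pred d) (th' th k) (la' d th la k) pts').
  assert (Hcnt : (total pts' <= cnta (hseq (pred d) (la' d th la k) r) 0 r)%nat).
  { apply IHa.
    - intros j' Hj'. unfold th'. apply Hrg. auto.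
    - intros j' Hj'. unfold th'. apply (theta_lt th (S r) Hs); auto.
      unfold skip. destruct (Nat.ltb_spec j' k); destruct (Nat.ltb_spec (S j') k); lia.
    - intros j' Hj'. unfold la'. apply Rmult_integral_contrapositive. split.
      apply Rmult_integral_contrapositive. split. apply Hnz; auto. apply not_0_INR; lia.
      apply Hsin; auto.
    - exists x1, y1. exact Hx1.
    - exact Hv'. }
  assert (Hcomb := comb (S r) d k la (la' d th la k) Hr3 Hd Hk Hnz).
  simpl pred in Hcomb.
  assert (Hc2 : (cnta (hseq (pred d) (la' d th la k) r) 0 r + 1 <= cnta h 0 (S r))%nat).
  { apply Hcomb; auto.
    intros j' Hj'. assert (Hj2 : (j' < r)%nat) by lia.
    assert (la (skip k j') <> 0) by (apply Hnz; auto).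
    assert (0 < INR d) by (apply lt_0_INR; lia).
    unfold la'. split; intros L.
    - pose proof (sin_diff_pos th (S r) Hrg Hs _ _ L Hk).
      assert (0 < la (skip k j') * la (skip k j')) by nra.
      assert (0 < la (skip k j') * la (skip k j') * (INR d * sin (th k - th (skip k j')))).
      { apply Rmult_lt_0_compat; auto. apply Rmult_lt_0_compat; auto. }
      nra.
    - pose proof (sin_diff_pos th (S r) Hrg Hs _ _ L (Hth' j' Hj2)).
      assert (sin (th k - th (skip k j')) = - sin (th (skip k j') - th k)).
      { rewrite <- sin_neg. f_equal. ring. }
      assert (0 < la (skip k j') * la (skip k j')) by nra.
      assert (0 < la (skip k j') * la (skip k j') * (INR d * sin (th (skip k j') - th k))).
      { apply Rmult_lt_0_compat; auto. apply Rmult_lt_0_compat; auto. }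
      nra. }
  lia.
Qed.
Lemma deriv_zero_off (g : R -> R) a l : derivable_pt_lim g a l ->
  (forall s, s <> a -> g s = 0) -> g a = 0.
Proof.
  intros D Z. destruct (Req_dec (g a) 0) as [E|E]; auto. exfalso.
  assert (C : continuity_pt g a) by (apply (derivable_continuous_pt g a (exist _ l D))).
  unfold continuity_pt, continue_in, limit1_in, limit_in in C.
  destruct (C (Rabs (g a)) ltac:(apply Rabs_pos_lt; auto)) as [alp [Halp Hc]].
  specialize (Hc (a + alp / 2)). simpl in Hc. unfold R_dist in Hc.
  rewrite Z in Hc by lra.
  assert (Rabs (0 - g a) < Rabs (g a)).
  { apply Hc. split. split. exact I. lra.
    replace (a + alp / 2 - a) with (alp / 2) by ring. rewrite Rabs_right; lra. }
  rewrite Rabs_minus_sym, Rminus_0_r in H. lra.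
Qed.

Lemma binform_zero_coef d a : (forall x y, binform d a x y = 0) -> forall i, (i <= d)%nat -> a i = 0.
Proof.
  revert a; induction d; intros a H i Hi.
  - replace i with 0%nat by lia. rewrite <- (binform_0 a 0 0). auto.
  - assert (Htop : a (S d) = 0).
    { pose proof (H 1 0) as E. rewrite binform_S in E. rewrite pow1 in E. lra. }
    assert (Hlow : forall x y, binform d a x y = 0).
    { intros x y.
      assert (Hoff : forall y', y' <> 0 -> binform d a x y' = 0).
      { intros y' Hy'. pose proof (H x y') as E. rewrite binform_S, Htop in E.
        assert (y' * binform d a x y' = 0) by lra. apply Rmult_integral in H0. destruct H0; [contradiction|auto]. }
      destruct (Req_dec y 0) as [Hy|Hy]; [|auto]. subst y.
      destruct (form_deriv d (binform d a) 0 1 ltac:(exists a; auto)) as [G [_ [_ D]]].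
      pose proof (D x 0 0) as D0.
      replace (binform d a x 0) with ((fun s => binform d a (x + s * 0) (0 + s * 1)) 0)
        by (simpl; f_equal; ring).
      apply (deriv_zero_off (fun s => binform d a (x + s * 0) (0 + s * 1)) 0 _ D0).
      - intros s Hs. replace (x + s * 0) with x by ring. apply Hoff. lra.
      }
    destruct (Nat.eq_dec i (S d)); [subst; auto|]. apply IHd; auto. lia.
Qed.

Lemma binform_nonzero_pt d a : binform_nonzero d a -> exists x y, binform d a x y <> 0.
Proof.
  intros [i [Hi Ha]]. apply NNPP. intros N. apply Ha.
  apply (binform_zero_coef d a); auto. intros x y.
  destruct (Req_dec (binform d a x y) 0); auto. exfalso; apply N; eauto.
Qed.

Definition plist (L : list (R * R)) (x y : R) : R :=
  fold_right (fun l acc => (fst l * x + snd l * y) * acc) 1 L.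

Lemma plist_app L1 L2 x y : plist (L1 ++ L2) x y = plist L1 x y * plist L2 x y.
Proof. induction L1; simpl; [ring|]. rewrite IHL1; ring. Qed.

Lemma prod_lin_plist m u v x y :
  prod_lin m u v x y = plist (map (fun i => (u i, v i)) (seq 0 m)) x y.
Proof.
  induction m. reflexivity.
  change (prod_lin (S m) u v x y) with (prod_lin m u v x y * (u m * x + v m * y)).
  rewrite seq_S, map_app, plist_app, <- IHm. simpl. ring.
Qed.

Lemma plist_split (f : R * R -> bool) L x y :
  plist L x y = plist (filter f L) x y * plist (filter (fun l => negb (f l)) L) x y.
Proof. induction L; simpl; [ring|]. destruct (f a); simpl; rewrite IHL; ring. Qed.

Lemma form_plist L k Q : IsForm k Q -> IsForm (length L + k) (fun x y => plist L x y * Q x y).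
Proof.
  induction L; intros HQ; simpl.
  - eapply form_ext; [|exact HQ]. intros; simpl; ring.
  - eapply form_ext; [|apply (form_mul_lin _ (fst a) (snd a) _ (IHL HQ))]. intros; simpl; ring.
Qed.

Lemma filter_len (f : R * R -> bool) L :
  (length (filter f L) + length (filter (fun l => negb (f l)) L))%nat = length L.
Proof. induction L; simpl; auto. destruct (f a); simpl; lia. Qed.

Lemma valid_ext F G pts : (forall x y, F x y = G x y) -> valid F pts -> valid G pts.
Proof.
  intros E [H1 H2]. split; auto. intros q Hq. destruct (H2 q Hq) as [Hn [u [v [Huv [Hl [k [Rf [HR Ho]]]]]]]].
  split; auto. exists u, v. split; auto. split; auto. exists k, Rf. split; auto.
  intros; rewrite <- E; auto.
Qed.

Lemma prop_lin u0 v0 u v : (u0 <> 0 \/ v0 <> 0) -> u * (- v0) + v * u0 = 0 ->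
  exists c, forall x y, u * x + v * y = c * (u0 * x + v0 * y).
Proof.
  intros [H|H] E.
  - exists (u / u0). intros. assert (v = u * v0 / u0) by (field_simplify; auto; apply (Rmult_eq_reg_r u0); auto; field_simplify; lra).
    subst v. field; auto.
  - exists (v / v0). intros. assert (u = v * u0 / v0) by (apply (Rmult_eq_reg_r v0); auto; field_simplify; auto; lra).
    subst u. field; auto.
Qed.

Lemma plist_pow (A : list (R * R)) u0 v0 : (u0 <> 0 \/ v0 <> 0) ->
  (forall l, In l A -> fst l * (- v0) + snd l * u0 = 0) ->
  exists c, forall x y, plist A x y = c * (u0 * x + v0 * y) ^ length A.
Proof.
  intros Hn. induction A as [|l A IH]; intros H.
  - exists 1. intros; simpl; ring.
  - destruct IH as [c Hc]. intros; apply H; simpl; auto.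
    destruct (prop_lin u0 v0 (fst l) (snd l) Hn (H l (or_introl eq_refl))) as [c' Hc'].
    exists (c' * c). intros x y. simpl. rewrite Hc, Hc'. ring.
Qed.

Lemma group : forall n L, length L = n -> (forall l, In l L -> fst l <> 0 \/ snd l <> 0) ->
  forall k Q, IsForm k Q ->
  exists pts, valid (fun x y => plist L x y * Q x y) pts /\ total pts = length L /\
    (forall q, In q pts -> exists l, In l L /\ fst l * fst (fst q) + snd l * snd (fst q) = 0).
Proof.
  intros n. induction n as [n IH] using (well_founded_induction Wf_nat.lt_wf).
  intros L HL Hnz k Q HQ. destruct L as [|l0 L'].
  - exists nil. split; [split; simpl; auto; intros q []|]. split; auto. intros q [].
  - set (P := (- snd l0, fst l0)).
    set (test := fun l : R * R => if Req_EM_T (fst l * fst P + snd l * snd P) 0 then true else false).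
    set (A := filter test (l0 :: L')). set (B := filter (fun l => negb (test l)) (l0 :: L')).
    assert (Hl0 : fst l0 <> 0 \/ snd l0 <> 0) by (apply Hnz; simpl; auto).
    assert (HP : nz P) by (unfold nz, P; simpl; destruct Hl0; [right|left]; lra).
    assert (Ht0 : test l0 = true).
    { unfold test, P. simpl. destruct (Req_EM_T (fst l0 * - snd l0 + snd l0 * fst l0) 0); auto. exfalso; apply n0; ring. }
    assert (HA : forall l, In l A -> fst l * (- snd l0) + snd l * fst l0 = 0).
    { intros l Hl. unfold A in Hl. apply filter_In in Hl. destruct Hl as [_ Hl]. unfold test in Hl.
      destruct (Req_EM_T _ 0); [auto|discriminate]. }
    assert (HB : forall l, In l B -> In l (l0 :: L') /\ fst l * fst P + snd l * snd P <> 0).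
    { intros l Hl. unfold B in Hl. apply filter_In in Hl. destruct Hl as [Hl Ht]. unfold test in Ht.
      destruct (Req_EM_T _ 0); [discriminate|auto]. }
    assert (HlenB : (length B < n)%nat).
    { unfold B. simpl. rewrite Ht0. simpl. rewrite <- HL. simpl.
      pose proof (filter_len test L'). lia. }
    destruct (plist_pow A (fst l0) (snd l0) Hl0 HA) as [c Hc].
    destruct (IH (length B) HlenB B eq_refl ltac:(intros l Hl; apply Hnz; apply HB; auto)
                (length A + k)%nat (fun x y => plist A x y * Q x y) (form_plist A k Q HQ))
      as [ptsB [HvB [HtB HzB]]].
    exists ((P, length A) :: ptsB). split; [split|split].
    + simpl. split; [|apply HvB]. intros q Hq Hpr.
      destruct (HzB q Hq) as [l [Hl Hlz]]. destruct (HB l Hl) as [_ Hne].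
      destruct HvB as [_ HvB']. destruct (HvB' q Hq) as [Hnzq _].
      apply Hne. apply (lin_prop (fst l) (snd l) (fst q) P); auto. apply prop_sym; auto.
    + intros q [<-|Hq].
      * cbn [fst snd]. split; auto. exists (fst l0), (snd l0). split; auto. split. unfold P; cbn [fst snd]; ring.
        exists (length B + k)%nat, (fun x y => c * (plist B x y * Q x y)). split.
        apply form_scal, form_plist; auto.
        intros x y. cbv beta. rewrite (plist_split test (l0 :: L')). fold A B. rewrite Hc. ring.
      * destruct HvB as [_ HvB']. destruct (HvB' q Hq) as [Hn Ho]. split; auto.
        destruct Ho as [u [v [Huv [Hl [k' [Rf [HR E]]]]]]].
        exists u, v. split; auto. split; auto. exists k', Rf. split; auto.
        intros x y. cbv beta. rewrite (plist_split test (l0 :: L')). fold A B. rewrite <- E. cbv beta. ring.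
    + simpl. rewrite HtB. unfold A, B. pose proof (filter_len test (l0 :: L')) as FL. simpl length in FL at 3. lia.
    + intros q [<-|Hq].
      * exists l0. split; simpl; auto. ring.
      * destruct (HzB q Hq) as [l [Hl Hlz]]. exists l. split; auto. apply HB; auto.
Qed.
(* Indices k = 1..r of the paper are shifted to 0..r-1. *)
Theorem corollary2p5 (d : nat) (a : nat -> R) (tau r : nat)
  (theta lambda : nat -> R) :
  (1 <= d)%nat ->
  binform_nonzero d a ->
  num_real_linear_factors d a tau ->
  (2 <= r)%nat ->
  (forall k, (k < r)%nat -> - (PI / 2) < theta k <= PI / 2) ->
  (forall k, (S k < r)%nat -> theta k < theta (S k)) ->
  (forall k, (k < r)%nat -> lambda k <> 0) ->
  (forall x y, binform d a x y =
     sum_f_R0 (fun k => lambda k * (cos (theta k) * x - sin (theta k) * y) ^ d)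
              (r - 1)) ->
  (tau <= sign_changes (map lambda (seq 0%nat r) ++ ((((-1) ^ d * lambda 0%nat)%R) :: nil)))%nat.
Proof.
  intros Hd Hnz [[Htd [u [v [b [Huv Hfac]]]]] _] Hr Hrg Hs Hla Hrep.
  rewrite sigma_eq by (auto; lia).
  set (L := map (fun i => (u i, v i)) (seq 0 tau)).
  assert (HL : forall l, In l L -> fst l <> 0 \/ snd l <> 0).
  { intros l Hl. unfold L in Hl. apply in_map_iff in Hl. destruct Hl as [i [<- Hi]].
    apply in_seq in Hi. simpl. apply Huv. lia. }
  destruct (group (length L) L eq_refl HL (d - tau) (binform (d - tau) b) ltac:(exists b; auto))
    as [pts [Hv [Ht _]]].
  assert (HlenL : length L = tau) by (unfold L; rewrite length_map, length_seq; auto).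
  rewrite HlenL in Ht. rewrite <- Ht.
  apply (main r Hr d theta lambda pts); auto.
  - destruct (binform_nonzero_pt d a Hnz) as [x [y Hxy]]. exists x, y. unfold Spow.
    rewrite <- Hrep. auto.
  - eapply valid_ext; [|exact Hv]. intros x y. cbv beta. unfold Spow. rewrite <- Hrep, Hfac.
    unfold L. rewrite prod_lin_plist. reflexivity.
Qed.
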